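(* Let $\xi=\eta x.\chi$ be a tidy fixpoint formula with $x\in\mathrm{FV}(\chi)$ and $\xi\notin\mathrm{Clos}(\chi)$, and let $\chi'=\chi[x'/x]$ for a fresh variable $x'$. Then $\chi'$ is tidy, and: (1) the map $\phi\mapsto\phi[\xi/x']$ is a bijection from $\mathrm{Clos}(\chi')$ onto $\mathrm{Clos}(\xi)$. For all $\phi,\psi\in\mathrm{Clos}(\chi')$: (2) if $\phi\neq x'$ then ($\phi\rightarrow_C\psi$ iff $\phi[\xi/x']\rightarrow_C\psi[\xi/x']$), and $L_n(\phi)=L_n(\phi[\xi/x'])$; (3) if $x'\in\mathrm{FV}(\phi)$ then ($\phi\trianglelefteq_f\psi$ iff $\phi[\xi/x']\trianglelefteq_f\psi[\xi/x']$); (4) if $\phi,\psi$ are fixpoint formulas then ($\psi\sqsubseteq_C\phi$ iff $\psi[\xi/x']\sqsubseteq_C\phi[\xi/x']$); (5) if $\phi$ is a fixpoint formula then $h^\downarrow(\phi)=h^\downarrow(\phi[\xi/x'])$; (6) if $(\phi_n)_{n\in\omega}$ is an infinite trace through $\mathrm{Clos}(\chi')$, then $(\phi_n)_{n\in\omega}$ and $(\phi_n[\xi/x'])_{n\in\omega}$ have the same winner.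
   Context: Syntax. Formulas of the modal $\mu$-calculus are taken in negation normal form: $\phi ::= \top \mid \bot \mid p \mid \neg p \mid x \mid \phi\land\phi\mid\phi\lor\phi\mid\Diamond\phi\mid\Box\phi\mid\mu x.\phi\mid\nu x.\phi$, where $p$ ranges over proposition letters and $x$ over an infinite supply of variables (which occur only positively). The formulas $\top,\bot,p,\neg p,x$ are atomic. $\mathrm{FV}(\phi)$ and $\mathrm{BV}(\phi)$ are the sets of free and bound variables of $\phi$; $\phi$ is tidy if $\mathrm{FV}(\phi)\cap\mathrm{BV}(\phi)=\varnothing$. A fixpoint formula is one of the form $\eta x.\chi$ with $\eta\in\{\mu,\nu\}$; it has type $\eta$, where $\mu$ counts as odd and $\nu$ as even parity, and $\bar\eta$ denotes the other operator. $\chi[\xi/x]$ is the result of replacing every free occurrence of $x$ in $\chi$ by $\xi$; $\xi$ is free for $x$ in $\chi$ if no free variable of $\xi$ becomes bound in $\chi[\xi/x]$. A variable is fresh if it occurs in none of the formulas under consideration. Traces and closure. The trace relation $\rightarrow_C$: $\phi_0\odot\phi_1\rightarrow_C\phi_i$ for $\odot\in\{\land,\lor\}$, $i\in\{0,1\}$; $\heartsuit\phi\rightarrow_C\phi$ for $\heartsuit\in\{\Diamond,\Box\}$; $\eta x.\phi\rightarrow_C\phi[\eta x.\phi/x]$; atomic formulas have no successors. $\twoheadrightarrow_C$ is the reflexive transitive closure of $\rightarrow_C$, $\mathrm{Clos}(\phi)=\{\psi\mid\phi\twoheadrightarrow_C\psi\}$ (a finite set), and a trace is a finite or infinite sequence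 of formulas with consecutive members related by $\rightarrow_C$. Write $\phi\equiv_C\psi$ iff $\phi\twoheadrightarrow_C\psi$ and $\psi\twoheadrightarrow_C\phi$; its equivalence classes are (closure) clusters, and $C(\phi)$ is the cluster of $\phi$. Natural labelling: $L_n(\phi)=\phi$ for atomic $\phi$, $L_n(\heartsuit\psi)=\heartsuit$, $L_n(\psi_0\odot\psi_1)=\odot$, $L_n(\eta x.\psi)=\epsilon$. Free subformulas. $\phi\trianglelefteq_f\psi$ iff $\psi=\chi[\phi/y]$ for some formula $\chi$ and variable $y$ with $y\in\mathrm{FV}(\chi)$ and $\phi$ free for $y$ in $\chi$. Closure order. For a formula $\psi$, write $\rho\twoheadrightarrow_C^{\psi}\sigma$ iff there is a trace $\rho=\chi_0\rightarrow_C\cdots\rightarrow_C\chi_n=\sigma$ ($n\ge0$) with $\psi\trianglelefteq_f\chi_i$ for all $i\le n$. For fixpoint formulas $\phi,\psi$: $\phi\sqsubseteq_C\psi$ iff $\psi\twoheadrightarrow_C^{\psi}\phi$; $\phi\sqsubset_C\psi$ iff $\phi\sqsubseteq_C\psi$ and $\psi\not\sqsubseteq_C\phi$. Chains. An alternating $\sqsubset_C$-chain of length $n$ is a sequence $\eta_1x_1.\chi_1,\dots,\eta_nx_n.\chi_n$ of tidy fixpoint formulas with $\eta_ix_i.\chi_i\sqsubset_C\eta_{i+1}x_{i+1}.\chi_{i+1}$ and $\eta_{i+1}=\bar\eta_i$ for all $i<n$; it starts at the first and leads up to the last formula. For a tidy fixpoint formula $\xi$, $h^\uparrow(\xi)$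 (resp. $h^\downarrow(\xi)$) is the maximal length of an alternating $\sqsubset_C$-chain starting at (resp. leading up to) $\xi$. For a cluster $C$, $\mathit{cd}(C)$ is the maximal length of an alternating $\sqsubset_C$-chain inside $C$. Global priority map. For a tidy fixpoint formula $\psi=\eta y.\phi$ let $d=\mathit{cd}(C(\psi))-h^\uparrow(\psi)$ and set $\Omega_g(\psi)=d$ if $d$ has parity $\eta$ and $\Omega_g(\psi)=d+1$ otherwise; $\Omega_g$ is undefined on non-fixpoint formulas. The winner of an infinite trace of tidy formulas is $\exists$ if the largest value of $\Omega_g$ among the fixpoint formulas occurring infinitely often on it is even, and $\forall$ otherwise. *)

(* Defs.v *)
From Stdlib Require Import Arith List ZArith Relations ClassicalEpsilon Classical.
Import ListNotations.

Inductive fp := Mu | Nu.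

Definition fp_neg (e : fp) : fp := match e with Mu => Nu | Nu => Mu end.

(* Formulas in negation normal form; proposition letters and variables are nat. *)
Inductive form : Type :=
| FTop | FBot
| FProp (p : nat) | FNProp (p : nat)
| FVar (x : nat)
| FAnd (a b : form) | FOr (a b : form)
| FDia (a : form) | FBox (a : form)
| FFix (e : fp) (x : nat) (a : form).

Fixpoint free_in (x : nat) (f : form) : bool :=
  match f with
  | FVar y => Nat.eqb x y
  | FAnd a b | FOr a b => free_in x a || free_in x b
  | FDia a | FBox a => free_in x a
  | FFix _ y a => negb (Nat.eqb x y) && free_in x a
  | _ => false
  end.

Fixpoint bound_in (x : nat) (f : form) : bool :=
  match f with
  | FAnd a b | FOr a b => bound_in x a || bound_in x b
  | FDia a | FBox a => bound_in x a
  | FFix _ y a => Nat.eqb x y || bound_in x a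
  | _ => false
  end.

Definition occurs (x : nat) (f : form) : bool := free_in x f || bound_in x f.

Definition tidy (f : form) : Prop := forall y, ~ (free_in y f = true /\ bound_in y f = true).

(* subst f y g = f[g/y]: replace every free occurrence of y in f by g (no renaming) *)
Fixpoint subst (f : form) (y : nat) (g : form) : form :=
  match f with
  | FVar z => if Nat.eqb z y then g else FVar z
  | FAnd a b => FAnd (subst a y g) (subst b y g)
  | FOr a b => FOr (subst a y g) (subst b y g)
  | FDia a => FDia (subst a y g)
  | FBox a => FBox (subst a y g)
  | FFix e z a => if Nat.eqb z y then FFix e z a else FFix e z (subst a y g)
  | h => h
  end.

(* g is free for y in f: no free variable of g becomes bound in f[g/y] *)
Fixpoint free_for (g : form) (y : nat) (f : form) : bool :=
  match f with
  | FAnd a b | FOr a b => free_for g y a && free_for g y b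
  | FDia a | FBox a => free_for g y a
  | FFix _ z a =>
      if Nat.eqb z y then true
      else (negb (free_in y a) || negb (free_in z g)) && free_for g y a
  | _ => true
  end.

Definition is_fix (f : form) : Prop := match f with FFix _ _ _ => True | _ => False end.

Inductive step : form -> form -> Prop :=
| st_andl a b : step (FAnd a b) a
| st_andr a b : step (FAnd a b) b
| st_orl a b : step (FOr a b) a
| st_orr a b : step (FOr a b) b
| st_dia a : step (FDia a) a
| st_box a : step (FBox a) a
| st_fix e x a : step (FFix e x a) (subst a x (FFix e x a)).

Definition steps : form -> form -> Prop := clos_refl_trans form step.
Definition Clos (f : form) (g : form) : Prop := steps f g.

Definition clos_equiv (f g : form) : Prop := steps f g /\ steps g f.

Inductive label := LAtom (f : form) | LDia | LBox | LAnd | LOr | LEps.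

Definition Ln (f : form) : label :=
  match f with
  | FDia _ => LDia | FBox _ => LBox
  | FAnd _ _ => LAnd | FOr _ _ => LOr
  | FFix _ _ _ => LEps
  | h => LAtom h
  end.

Definition free_sub (phi psi : form) : Prop :=
  exists chi y, free_in y chi = true /\ free_for phi y chi = true /\ psi = subst chi y phi.

Inductive steps_in (psi : form) : form -> form -> Prop :=
| si_refl r : free_sub psi r -> steps_in psi r r
| si_step r s t : free_sub psi r -> step r s -> steps_in psi s t -> steps_in psi r t.

Definition csub (phi psi : form) : Prop := steps_in psi psi phi.
Definition csub_strict (phi psi : form) : Prop := csub phi psi /\ ~ csub psi phi.

Definition fix_type (f : form) : option fp :=
  match f with FFix e _ _ => Some e | _ => None end.

(* alternating strict chain, listed from bottom to top *)
Fixpoint alt_chain (l : list form) : Prop :=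
  match l with
  | [] => True
  | a :: t =>
      tidy a /\ is_fix a /\
      match t with
      | [] => True
      | b :: _ => csub_strict a b /\
                  fix_type b = option_map fp_neg (fix_type a) /\ alt_chain t
      end
  end.

Definition is_max (P : nat -> Prop) (n : nat) : Prop := P n /\ forall m, P m -> m <= n.
Definition max_of (P : nat -> Prop) : nat := epsilon (inhabits 0) (is_max P).

Definition h_up (xi : form) : nat :=
  max_of (fun n => exists l, alt_chain (xi :: l) /\ length (xi :: l) = n).
Definition h_down (xi : form) : nat :=
  max_of (fun n => exists l, alt_chain (l ++ [xi]) /\ length (l ++ [xi]) = n).
Definition cd_of (psi : form) : nat :=
  max_of (fun n => exists l, alt_chain l /\ Forall (clos_equiv psi) l /\ length l = n).

Definition fp_odd (e : fp) : bool := match e with Mu => true | Nu => false end.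

(* global priority map (only meaningful on fixpoint formulas) *)
Definition Omega_g (psi : form) : Z :=
  match psi with
  | FFix e _ _ =>
      let d := (Z.of_nat (cd_of psi) - Z.of_nat (h_up psi))%Z in
      if Bool.eqb (Z.odd d) (fp_odd e) then d else (d + 1)%Z
  | _ => 0%Z
  end.

Definition inf_often (t : nat -> form) (f : form) : Prop :=
  forall N, exists n, N <= n /\ t n = f.

Inductive player := PExists | PForall.

Definition exists_wins (t : nat -> form) : Prop :=
  exists f, is_fix f /\ inf_often t f /\ Z.even (Omega_g f) = true /\
    forall g, is_fix g -> inf_often t g -> (Omega_g g <= Omega_g f)%Z.

Definition winner (t : nat -> form) : player :=
  if excluded_middle_informative (exists_wins t) then PExists else PForall.

(* Main.v *)
Require Import Defs.
From Stdlib Require Import Arith List ZArith Relations Lia Bool ClassicalEpsilon Classical FunctionalExtensionality PropExtensionality.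
Import ListNotations.

Fixpoint size (f:form) : nat :=
  match f with
  | FAnd a b | FOr a b => S (size a + size b)
  | FDia a | FBox a | FFix _ _ a => S (size a)
  | _ => 1 end.

Lemma size_pos f : 1 <= size f. Proof. destruct f; simpl; lia. Qed.

Lemma subst_nf : forall f y g, free_in y f = false -> subst f y g = f.
Proof.
  induction f as [| | p | p | x | f1 IHf1 f2 IHf2 | f1 IHf1 f2 IHf2 | f IHf | f IHf | ee x f IHf]; intros y g H; simpl in *; auto.
  - destruct (Nat.eqb_spec x y); subst; auto. rewrite Nat.eqb_refl in H; discriminate.
  - apply orb_false_iff in H as [H1 H2]. rewrite IHf1, IHf2; auto.
  - apply orb_false_iff in H as [H1 H2]. rewrite IHf1, IHf2; auto.
  - rewrite IHf; auto.
  - rewrite IHf; auto.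
  - destruct (Nat.eqb_spec x y); subst; auto.
    rewrite IHf; auto. destruct (Nat.eqb_spec y x); try congruence. simpl in H; auto.
Qed.

Lemma free_subst : forall f y g v, free_in v (subst f y g) = true ->
  (free_in v f = true /\ v <> y) \/ free_in v g = true.
Proof.
  induction f as [| | p | p | x | f1 IHf1 f2 IHf2 | f1 IHf1 f2 IHf2 | f IHf | f IHf | ee x f IHf]; intros y g v H; simpl in *; try discriminate; auto.
  - destruct (Nat.eqb_spec x y); subst; auto.
    simpl in H. apply Nat.eqb_eq in H; subst. left; split; auto. apply Nat.eqb_refl.
  - apply orb_true_iff in H as [H|H].
    + destruct (IHf1 _ _ _ H) as [[H1 H2]|H1]; auto. left; rewrite H1; auto.
    + destruct (IHf2 _ _ _ H) as [[H1 H2]|H1]; auto. left; rewrite H1, orb_true_r; auto.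
  - apply orb_true_iff in H as [H|H].
    + destruct (IHf1 _ _ _ H) as [[H1 H2]|H1]; auto. left; rewrite H1; auto.
    + destruct (IHf2 _ _ _ H) as [[H1 H2]|H1]; auto. left; rewrite H1, orb_true_r; auto.
  - destruct (Nat.eqb_spec x y); subst; simpl in H.
    + apply andb_true_iff in H as [H1 H2]. left. split.
      rewrite H1, H2; auto. intro; subst. rewrite Nat.eqb_refl in H1; discriminate.
    + apply andb_true_iff in H as [H1 H2]. destruct (IHf _ _ _ H2) as [[? ?]|?]; auto.
      left. rewrite H1, H. auto.
Qed.

Lemma bound_subst : forall f y g v, bound_in v (subst f y g) = true ->
  bound_in v f = true \/ bound_in v g = true.
Proof.
  induction f as [| | p | p | x | f1 IHf1 f2 IHf2 | f1 IHf1 f2 IHf2 | f IHf | f IHf | ee x f IHf]; intros y g v H; simpl in *; auto.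
  - destruct (Nat.eqb x y); auto.
  - apply orb_true_iff in H as [H|H].
    + destruct (IHf1 _ _ _ H) as [H1|H1]; auto. left; rewrite H1; auto.
    + destruct (IHf2 _ _ _ H) as [H1|H1]; auto. left; rewrite H1, orb_true_r; auto.
  - apply orb_true_iff in H as [H|H].
    + destruct (IHf1 _ _ _ H) as [H1|H1]; auto. left; rewrite H1; auto.
    + destruct (IHf2 _ _ _ H) as [H1|H1]; auto. left; rewrite H1, orb_true_r; auto.
  - eauto.
  - eauto.
  - destruct (Nat.eqb x y); simpl in H; auto.
    apply orb_true_iff in H as [H|H]. rewrite H; auto.
    destruct (IHf _ _ _ H) as [H1|H1]; auto. left; rewrite H1, orb_true_r; auto.
Qed.

Lemma step_free : forall a b v, step a b -> free_in v b = true -> free_in v a = true.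
Proof.
  intros a b v H; destruct H; simpl; intro Hv; rewrite ?Hv, ?orb_true_r; auto.
  destruct (free_subst _ _ _ _ Hv) as [[H1 H2]|H1]; auto.
  simpl. apply andb_true_iff; split; auto. apply negb_true_iff, Nat.eqb_neq; auto.
Qed.

Lemma step_bound : forall a b v, step a b -> bound_in v b = true -> bound_in v a = true.
Proof.
  intros a b v H; destruct H; simpl; intro Hv; rewrite ?Hv, ?orb_true_r; auto.
  destruct (bound_subst _ _ _ _ Hv) as [H1|H1]; auto. rewrite H1, orb_true_r; auto.
Qed.

Lemma steps_rt1n a b : steps a b <-> clos_refl_trans_1n form step a b.
Proof. unfold steps; split; [apply clos_rt_rt1n|apply clos_rt1n_rt]. Qed.

Lemma steps_ind1 (P : form -> Prop) a : P a -> (forall b c, steps a b -> P b -> step b c -> P c) -> forall b, steps a b -> P b.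
Proof.
  intros H0 HS b Hb. unfold steps in Hb. apply clos_rt_rtn1 in Hb. induction Hb; auto.
  apply HS with y; auto. apply clos_rtn1_rt; auto.
Qed.

Lemma steps_refl a : steps a a. Proof. apply rt_refl. Qed.
Lemma steps_trans a b c : steps a b -> steps b c -> steps a c. Proof. apply rt_trans. Qed.
Lemma steps_step a b : step a b -> steps a b. Proof. apply rt_step. Qed.
Lemma steps_step_r a b c : steps a b -> step b c -> steps a c.
Proof. intros; eapply steps_trans; eauto using steps_step. Qed.

Lemma steps_free a b v : steps a b -> free_in v b = true -> free_in v a = true.
Proof. intros H; revert v; pattern b; apply (steps_ind1 _ a); eauto using step_free. Qed.
Lemma steps_bound a b v : steps a b -> bound_in v b = true -> bound_in v a = true.
Proof. intros H; revert v; pattern b; apply (steps_ind1 _ a); eauto using step_bound. Qed.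

Lemma steps_tidy a b : tidy a -> steps a b -> tidy b.
Proof. intros Ht H y [H1 H2]. apply (Ht y); split; eauto using steps_free, steps_bound. Qed.

Inductive occd (s : form) : nat -> form -> Prop :=
| od_here : occd s 0 s
| od_andl n a b : occd s n a -> occd s (S n) (FAnd a b)
| od_andr n a b : occd s n b -> occd s (S n) (FAnd a b)
| od_orl n a b : occd s n a -> occd s (S n) (FOr a b)
| od_orr n a b : occd s n b -> occd s (S n) (FOr a b)
| od_dia n a : occd s n a -> occd s (S n) (FDia a)
| od_box n a : occd s n a -> occd s (S n) (FBox a)
| od_fix n e z a : occd s n a -> free_in z s = false -> occd s (S n) (FFix e z a).
Definition occf s f := exists n, occd s n f.

Lemma occd_fv s n f v : occd s n f -> free_in v s = true -> free_in v f = true.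
Proof.
  induction 1; intro Hv; simpl; rewrite ?IHoccd, ?orb_true_r; auto.
  apply andb_true_iff; split; auto. apply negb_true_iff, Nat.eqb_neq. intro; subst; congruence.
Qed.

Lemma occd_size s n f : occd s n f -> size s + n <= size f.
Proof. induction 1; simpl; lia. Qed.

Lemma occf_size s f : occf s f -> size s <= size f.
Proof. intros [n H]; apply occd_size in H; lia. Qed.

Lemma occf_size_eq s f : occf s f -> size s = size f -> s = f.
Proof.
  intros [n H] E. destruct H; auto; apply occd_size in H; simpl in E; lia.
Qed.

Lemma occf_here s : occf s s. Proof. exists 0; constructor. Qed.

Lemma occd_trans a n b m c : occd a n b -> occd b m c -> occd a (n+m) c.
Proof.
  intros H1 H2; induction H2 as [|k p q H IH|k p q H IH|k p q H IH|k p q H IH|k p H IH|k p H IH|k ee z p H IH Hz].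
  1: rewrite Nat.add_0_r; auto.
  all: rewrite Nat.add_succ_r.
  all: try solve [apply od_andl; auto | apply od_andr; auto | apply od_orl; auto | apply od_orr; auto | apply od_dia; auto | apply od_box; auto].
  apply od_fix; auto.
  destruct (free_in z a) eqn:E; auto. rewrite (occd_fv _ _ _ _ H1 E) in Hz; discriminate.
Qed.

Lemma occf_trans a b c : occf a b -> occf b c -> occf a c.
Proof. intros [n H1] [m H2]; exists (n+m); eapply occd_trans; eauto. Qed.

Lemma occf_antisym a b : occf a b -> occf b a -> a = b.
Proof. intros H1 H2. apply occf_size_eq; auto. apply occf_size in H1; apply occf_size in H2; lia. Qed.

Lemma occd_subst s n B z g : occd s n B -> free_in z s = false -> occd s n (subst B z g).
Proof.
  induction 1; intro Hz; simpl; try (constructor; auto; fail).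
  - rewrite subst_nf; auto. constructor.
  - destruct (Nat.eqb z0 z); constructor; auto.
Qed.

Lemma occd_reach : forall n s f, occd s n f -> steps f s.
Proof.
  induction n; intros s f H; inversion H; subst.
  - apply steps_refl.
  - apply steps_trans with a; [apply steps_step; constructor| eauto].
  - apply steps_trans with b; [apply steps_step; constructor| eauto].
  - apply steps_trans with a; [apply steps_step; constructor| eauto].
  - apply steps_trans with b; [apply steps_step; constructor| eauto].
  - apply steps_trans with a; [apply steps_step; constructor| eauto].
  - apply steps_trans with a; [apply steps_step; constructor| eauto].
  - eapply steps_trans; [apply steps_step; constructor| ].
    apply IHn. apply occd_subst; auto.
Qed.

Lemma occf_reach s f : occf s f -> steps f s.
Proof. intros [n H]; eapply occd_reach; eauto. Qed.

Fixpoint allv (y : nat) (f : form) : bool :=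
  match f with
  | FVar z => Nat.eqb y z
  | FAnd a b | FOr a b => allv y a || allv y b
  | FDia a | FBox a => allv y a
  | FFix _ z a => Nat.eqb y z || allv y a
  | _ => false
  end.

Fixpoint maxv (f : form) : nat :=
  match f with
  | FVar z => z
  | FAnd a b | FOr a b => max (maxv a) (maxv b)
  | FDia a | FBox a => maxv a
  | FFix _ z a => max z (maxv a)
  | _ => 0
  end.

Lemma allv_maxv y f : allv y f = true -> y <= maxv f.
Proof.
  induction f; simpl; intro H; try discriminate;
  repeat match goal with H : _ || _ = true |- _ => apply orb_true_iff in H as [H|H] end;
  repeat match goal with H : Nat.eqb _ _ = true |- _ => apply Nat.eqb_eq in H; subst end;
  try lia; try (specialize (IHf1 H); lia); try (specialize (IHf2 H); lia); try (specialize (IHf H); lia).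
Qed.

Lemma allv_free y f : allv y f = false -> free_in y f = false.
Proof.
  induction f; simpl; intro H; auto;
  repeat match goal with H : _ || _ = false |- _ => apply orb_false_iff in H as [? ?] end;
  rewrite ?IHf1, ?IHf2, ?IHf, ?andb_false_r; auto.
Qed.

Lemma free_for_nf g y f : free_in y f = false -> free_for g y f = true.
Proof.
  induction f; simpl; intro H; auto;
  repeat match goal with H : _ || _ = false |- _ => apply orb_false_iff in H as [? ?] end;
  rewrite ?IHf1, ?IHf2; auto.
  destruct (Nat.eqb_spec x y); auto.
  destruct (Nat.eqb_spec y x); try congruence. simpl in H.
  rewrite IHf, H; auto.
Qed.

Lemma free_sub_occf s f : free_sub s f -> occf s f.
Proof.
  intros [C [y [H1 [H2 ->]]]]. revert H1 H2. induction C; simpl; intros H1 H2; try discriminate;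
  repeat match goal with H : _ && _ = true |- _ => apply andb_true_iff in H as [? ?] end.
  - apply Nat.eqb_eq in H1; subst. rewrite Nat.eqb_refl. apply occf_here.
  - apply orb_true_iff in H1 as [H1|H1]; [destruct (IHC1 H1 H) as [n Hn]|destruct (IHC2 H1 H0) as [n Hn]];
    exists (S n); [apply od_andl|apply od_andr]; auto.
  - apply orb_true_iff in H1 as [H1|H1]; [destruct (IHC1 H1 H) as [n Hn]|destruct (IHC2 H1 H0) as [n Hn]];
    exists (S n); [apply od_orl|apply od_orr]; auto.
  - destruct (IHC H1 H2) as [n Hn]; exists (S n); constructor; auto.
  - destruct (IHC H1 H2) as [n Hn]; exists (S n); constructor; auto.
  - destruct (Nat.eqb_spec x y); subst.
    + rewrite Nat.eqb_refl in H; discriminate.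
    + apply andb_true_iff in H2 as [H3 H4]. rewrite H0 in H3; simpl in H3.
      destruct (IHC H0 H4) as [m Hm]. exists (S m). constructor; auto.
      apply negb_true_iff; auto.
Qed.

Lemma occd_free_sub_gen s n f : occd s n f -> forall y, allv y f = false -> allv y s = false ->
  exists C, free_in y C = true /\ free_for s y C = true /\ subst C y s = f.
Proof.
  induction 1; intros y Hf Hs; simpl in Hf;
  repeat match goal with H : _ || _ = false |- _ => apply orb_false_iff in H as [? ?] end.
  - exists (FVar y); simpl; rewrite Nat.eqb_refl; auto.
  - destruct (IHoccd y H0 Hs) as [C [? [? ?]]]. exists (FAnd C b); simpl.
    rewrite H2, H3, H4, (free_for_nf s y b), (subst_nf b y s) by (apply allv_free; auto); auto.
  - destruct (IHoccd y H1 Hs) as [C [? [? ?]]]. exists (FAnd a C); simpl.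
    rewrite H2, H3, H4, (free_for_nf s y a), (subst_nf a y s), orb_true_r by (apply allv_free; auto); auto.
  - destruct (IHoccd y H0 Hs) as [C [? [? ?]]]. exists (FOr C b); simpl.
    rewrite H2, H3, H4, (free_for_nf s y b), (subst_nf b y s) by (apply allv_free; auto); auto.
  - destruct (IHoccd y H1 Hs) as [C [? [? ?]]]. exists (FOr a C); simpl.
    rewrite H2, H3, H4, (free_for_nf s y a), (subst_nf a y s), orb_true_r by (apply allv_free; auto); auto.
  - destruct (IHoccd y Hf Hs) as [C [? [? ?]]]. exists (FDia C); simpl. rewrite H1, H2, H0; auto.
  - destruct (IHoccd y Hf Hs) as [C [? [? ?]]]. exists (FBox C); simpl. rewrite H1, H2, H0; auto.
  - destruct (IHoccd y H2 Hs) as [C [? [? ?]]]. exists (FFix e z C); simpl.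
    rewrite H1. rewrite H3, H4, H5, H0; simpl. rewrite Nat.eqb_sym, H1; auto.
Qed.

Lemma occf_free_sub s f : occf s f -> free_sub s f.
Proof.
  intros [n H]. set (y := S (maxv f + maxv s)).
  assert (Hf : allv y f = false) by (destruct (allv y f) eqn:E; auto; apply allv_maxv in E; unfold y in E; lia).
  assert (Hs : allv y s = false) by (destruct (allv y s) eqn:E; auto; apply allv_maxv in E; unfold y in E; lia).
  destruct (occd_free_sub_gen _ _ _ H y Hf Hs) as [C [? [? ?]]]. exists C, y; auto.
Qed.

Lemma free_sub_iff s f : free_sub s f <-> occf s f.
Proof. split; auto using free_sub_occf, occf_free_sub. Qed.

Inductive sub (s : form) : form -> Prop :=
| sub_refl : sub s s
| sub_andl a b : sub s a -> sub s (FAnd a b)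
| sub_andr a b : sub s b -> sub s (FAnd a b)
| sub_orl a b : sub s a -> sub s (FOr a b)
| sub_orr a b : sub s b -> sub s (FOr a b)
| sub_dia a : sub s a -> sub s (FDia a)
| sub_box a : sub s a -> sub s (FBox a)
| sub_fix e z a : sub s a -> sub s (FFix e z a).

Lemma sub_occf s a : sub s a -> (forall z, bound_in z a = true -> free_in z s = false) -> occf s a.
Proof.
  induction 1; intro HB; simpl in HB.
  - apply occf_here.
  - destruct IHsub as [n Hn]. intros z Hz; apply HB; rewrite Hz; auto. exists (S n); apply od_andl; auto.
  - destruct IHsub as [n Hn]. intros z Hz; apply HB; rewrite Hz, orb_true_r; auto. exists (S n); apply od_andr; auto.
  - destruct IHsub as [n Hn]. intros z Hz; apply HB; rewrite Hz; auto. exists (S n); apply od_orl; auto.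
  - destruct IHsub as [n Hn]. intros z Hz; apply HB; rewrite Hz, orb_true_r; auto. exists (S n); apply od_orr; auto.
  - destruct IHsub as [n Hn]. auto. exists (S n); apply od_dia; auto.
  - destruct IHsub as [n Hn]. auto. exists (S n); apply od_box; auto.
  - destruct IHsub as [n Hn]. intros z' Hz; apply HB; rewrite Hz, orb_true_r; auto.
    exists (S n); apply od_fix; auto. apply HB. rewrite Nat.eqb_refl; auto.
Qed.

Lemma sub_trans a b c : sub a b -> sub b c -> sub a c.
Proof. intros H1 H2; induction H2; auto; [apply sub_andl|apply sub_andr|apply sub_orl|apply sub_orr|apply sub_dia|apply sub_box|apply sub_fix]; auto. Qed.

Lemma sub_size a b : sub a b -> size a <= size b.
Proof. induction 1; simpl; lia. Qed.

Inductive Rx (x' : nat) : form -> form -> Prop :=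
| Rx_x a : Rx x' a (FVar x')
| Rx_top : Rx x' FTop FTop
| Rx_bot : Rx x' FBot FBot
| Rx_prop p : Rx x' (FProp p) (FProp p)
| Rx_nprop p : Rx x' (FNProp p) (FNProp p)
| Rx_var v : Rx x' (FVar v) (FVar v)
| Rx_and a b c d : Rx x' a c -> Rx x' b d -> Rx x' (FAnd a b) (FAnd c d)
| Rx_or a b c d : Rx x' a c -> Rx x' b d -> Rx x' (FOr a b) (FOr c d)
| Rx_dia a c : Rx x' a c -> Rx x' (FDia a) (FDia c)
| Rx_box a c : Rx x' a c -> Rx x' (FBox a) (FBox c)
| Rx_fix e z a c : Rx x' a c -> Rx x' (FFix e z a) (FFix e z c).

Lemma Rx_refl x' a : Rx x' a a.
Proof. induction a; constructor; auto. Qed.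

Lemma Rx_subst x' A B : Rx x' A B -> forall z al rh, z <> x' -> Rx x' al rh -> Rx x' (subst A z al) (subst B z rh).
Proof.
  induction 1 as [a0| | |p|p|v|a b c d H1 IH1 H2 IH2|a b c d H1 IH1 H2 IH2|a c H1 IH1|a c H1 IH1|ee w a c H1 IH1]; intros z al rh Hz HR; simpl; try (constructor; auto; fail).
  - destruct (Nat.eqb_spec x' z); [congruence|constructor].
  - destruct (Nat.eqb v z); auto; constructor.
  - destruct (Nat.eqb w z); constructor; auto.
Qed.

Lemma Rx_sim x' al rh rh2 : Rx x' al rh -> bound_in x' rh = false -> step rh rh2 ->
  exists al2, step al al2 /\ Rx x' al2 rh2.
Proof.
  intros HR HB HS. destruct HS; inversion HR; subst; simpl in HB.
  all: try (eexists; split; [constructor|auto]; fail).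
  eexists; split; [constructor|].
  apply Rx_subst; auto. intro; subst. rewrite Nat.eqb_refl in HB; discriminate.
Qed.

Lemma Rx_init x' x A : Rx x' A (subst A x (FVar x')).
Proof.
  induction A; simpl; try (constructor; auto; fail).
  - destruct (Nat.eqb x0 x); constructor.
  - destruct (Nat.eqb x0 x); constructor; auto. apply Rx_refl.
Qed.

Lemma Rx_eq x' al rh : Rx x' al rh -> free_in x' rh = false -> bound_in x' rh = false -> al = rh.
Proof.
  induction 1; simpl; intros HF HB; auto.
  - rewrite Nat.eqb_refl in HF; discriminate.
  - apply orb_false_iff in HF as [? ?]; apply orb_false_iff in HB as [? ?]; f_equal; auto.
  - apply orb_false_iff in HF as [? ?]; apply orb_false_iff in HB as [? ?]; f_equal; auto.
  - f_equal; auto.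
  - f_equal; auto.
  - apply orb_false_iff in HB as [H1 H2]. rewrite H1 in HF; simpl in HF. f_equal; auto.
Qed.

Lemma Rx_sub x' al rh s : Rx x' al rh -> sub s rh -> free_in x' s = false -> bound_in x' s = false -> sub s al.
Proof.
  intros HR HS HF HB. revert al HR. induction HS; intros al HR.
  - rewrite (Rx_eq _ _ _ HR HF HB). constructor.
  - inversion HR; subst; constructor; auto.
  - inversion HR; subst; apply sub_andr; auto.
  - inversion HR; subst; constructor; auto.
  - inversion HR; subst; apply sub_orr; auto.
  - inversion HR; subst; constructor; auto.
  - inversion HR; subst; constructor; auto.
  - inversion HR; subst; constructor; auto.
Qed.

Definition World (e : fp) (x : nat) (chi : form) (x' : nat) : Prop :=
  tidy (FFix e x chi) /\ free_in x chi = true /\ ~ Clos chi (FFix e x chi) /\ occurs x' (FFix e x chi) = false.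



Lemma W_x'free e x chi x' : World e x chi x' -> free_in x' (FFix e x chi) = false.
Proof. intros [_ [_ [_ H]]]. unfold occurs in H. apply orb_false_iff in H; tauto. Qed.
Lemma W_x'bound e x chi x' : World e x chi x' -> bound_in x' (FFix e x chi) = false.
Proof. intros [_ [_ [_ H]]]. unfold occurs in H. apply orb_false_iff in H; tauto. Qed.
Lemma W_neq e x chi x' : World e x chi x' -> x' <> x.
Proof. intros W Hx. pose proof (W_x'bound _ _ _ _ W). simpl in H. subst. rewrite Nat.eqb_refl in H; discriminate. Qed.
Lemma W_x'bchi e x chi x' : World e x chi x' -> bound_in x' chi = false.
Proof. intros W. pose proof (W_x'bound _ _ _ _ W). simpl in H. apply orb_false_iff in H; tauto. Qed.

Lemma bound_chip x chi x' z : bound_in z (subst chi x (FVar x')) = true -> bound_in z chi = true.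
Proof. intro H. destruct (bound_subst _ _ _ _ H); auto. simpl in H0; discriminate. Qed.

Lemma W_bv_notfree e x chi x' z : World e x chi x' -> bound_in z chi = true -> free_in z (FFix e x chi) = false.
Proof.
  intros [Ht _] Hb. destruct (free_in z (FFix e x chi)) eqn:E; auto. exfalso; apply (Ht z); split; auto.
  simpl; rewrite Hb, orb_true_r; auto.
Qed.

Lemma Clos_chip_bound e x chi x' r z : World e x chi x' -> Clos (subst chi x (FVar x')) r ->
  bound_in z r = true -> bound_in z chi = true.
Proof. intros W H Hb. eapply bound_chip. eapply steps_bound; eauto. Qed.

Lemma Clos_chip_x'bound e x chi x' r : World e x chi x' -> Clos (subst chi x (FVar x')) r -> bound_in x' r = false.
Proof.
  intros W H. destruct (bound_in x' r) eqn:E; auto. apply (Clos_chip_bound _ _ _ _ _ _ W H) in E.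
  rewrite (W_x'bchi _ _ _ _ W) in E; discriminate.
Qed.

Lemma Clos_chip_R e x chi x' r : World e x chi x' -> Clos (subst chi x (FVar x')) r ->
  exists al, Clos chi al /\ Rx x' al r.
Proof.
  intros W H. pattern r; apply (steps_ind1 _ (subst chi x (FVar x'))); auto.
  - exists chi; split; [apply steps_refl|apply Rx_init].
  - intros b c Hb [al [Hal HR]] Hs. destruct (Rx_sim _ _ _ _ HR (Clos_chip_x'bound _ _ _ _ _ W Hb) Hs) as [al2 [? ?]].
    exists al2; split; auto. eapply steps_step_r; eauto.
Qed.

Lemma Good_chip e x chi x' r : World e x chi x' -> Clos (subst chi x (FVar x')) r -> ~ sub (FFix e x chi) r.
Proof.
  intros W H Hs. destruct (Clos_chip_R _ _ _ _ _ W H) as [al [Hal HR]].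
  assert (Hs2 : sub (FFix e x chi) al).
  { eapply Rx_sub; eauto. apply (W_x'free _ _ _ _ W). apply (W_x'bound _ _ _ _ W). }
  apply sub_occf in Hs2. apply occf_reach in Hs2. destruct W as [_ [_ [HC _]]]. apply HC. eapply steps_trans; eauto.
  intros z Hz. eapply W_bv_notfree; eauto. eapply steps_bound; eauto.
Qed.

Lemma tidy_chip e x chi x' : World e x chi x' -> tidy (subst chi x (FVar x')).
Proof.
  intros W v [HF HB]. apply bound_chip in HB. destruct (free_subst _ _ _ _ HF) as [[H1 H2]|H1].
  - pose proof (W_bv_notfree _ _ _ _ _ W HB) as H3.
    simpl in H3. destruct (Nat.eqb_spec v x); try congruence. simpl in H3. congruence.
  - simpl in H1. apply Nat.eqb_eq in H1; subst. rewrite (W_x'bchi _ _ _ _ W) in HB; discriminate.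
Qed.

Lemma size_subst_ge D y g : size D <= size (subst D y g).
Proof.
  induction D; simpl; try lia.
  - destruct (Nat.eqb x y); simpl; auto using size_pos.
  - destruct (Nat.eqb x y); simpl; lia.
Qed.

Lemma size_subst_free D y g : free_in y D = true -> size D + size g <= size (subst D y g) + 1.
Proof.
  induction D; simpl; intro H; try discriminate.
  - apply Nat.eqb_eq in H; subst. rewrite Nat.eqb_refl. lia.
  - pose proof (size_subst_ge D1 y g); pose proof (size_subst_ge D2 y g).
    apply orb_true_iff in H as [H|H]; [specialize (IHD1 H)|specialize (IHD2 H)]; lia.
  - pose proof (size_subst_ge D1 y g); pose proof (size_subst_ge D2 y g).
    apply orb_true_iff in H as [H|H]; [specialize (IHD1 H)|specialize (IHD2 H)]; lia.
  - specialize (IHD H); lia.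
  - specialize (IHD H); lia.
  - apply andb_true_iff in H as [H1 H2]. apply negb_true_iff in H1. rewrite Nat.eqb_sym, H1.
    simpl. specialize (IHD H2); lia.
Qed.

Lemma free_subst_keep phi y g v : free_in v phi = true -> v <> y -> free_in v (subst phi y g) = true.
Proof.
  induction phi; simpl; intros H Hv; try discriminate.
  - apply Nat.eqb_eq in H; rewrite <- H. destruct (Nat.eqb_spec v y); try congruence. simpl; apply Nat.eqb_refl.
  - apply orb_true_iff in H as [H|H]; apply orb_true_iff; [left|right]; auto.
  - apply orb_true_iff in H as [H|H]; apply orb_true_iff; [left|right]; auto.
  - auto.
  - auto.
  - destruct (Nat.eqb x y); simpl; auto.
    apply andb_true_iff in H as [H1 H2]. rewrite H1, IHphi; auto.
Qed.

Lemma subst_comm B z rh x' xi : z <> x' -> free_in z xi = false -> bound_in x' B = false ->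
  subst (subst B z rh) x' xi = subst (subst B x' xi) z (subst rh x' xi).
Proof.
  induction B; intros Hz Hxi HB; simpl in *; auto.
  - destruct (Nat.eqb_spec x z); destruct (Nat.eqb_spec x x'); subst; simpl; try congruence.
    + rewrite Nat.eqb_refl; auto.
    + rewrite Nat.eqb_refl. rewrite subst_nf; auto.
    + destruct (Nat.eqb_spec x z); destruct (Nat.eqb_spec x x'); try congruence; auto.
  - apply orb_false_iff in HB as [? ?]. rewrite IHB1, IHB2; auto.
  - apply orb_false_iff in HB as [? ?]. rewrite IHB1, IHB2; auto.
  - rewrite IHB; auto.
  - rewrite IHB; auto.
  - apply orb_false_iff in HB as [H1 H2]. destruct (Nat.eqb_spec x x'); [subst; rewrite Nat.eqb_refl in H1; discriminate|].
    destruct (Nat.eqb_spec x z); subst; simpl.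
    + rewrite Nat.eqb_refl. destruct (Nat.eqb_spec z x'); congruence.
    + destruct (Nat.eqb_spec x x'); try congruence. destruct (Nat.eqb_spec x z); try congruence.
      rewrite IHB; auto.
Qed.

Definition BVok (xi : form) (r : form) : Prop := forall z, bound_in z r = true -> free_in z xi = false.

Lemma step_fwd x' xi r r2 : step r r2 -> bound_in x' r = false -> BVok xi r ->
  step (subst r x' xi) (subst r2 x' xi).
Proof.
  intros HS HB HOK. destruct HS; simpl; try constructor.
  simpl in HB. apply orb_false_iff in HB as [H1 H2]. destruct (Nat.eqb_spec x x'); [subst; rewrite Nat.eqb_refl in H1; discriminate|].
  rewrite subst_comm; auto. simpl. destruct (Nat.eqb_spec x x'); try congruence. constructor.
  apply HOK. simpl. rewrite Nat.eqb_refl; auto.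
Qed.

Lemma step_pre x' xi r s : step (subst r x' xi) s -> r <> FVar x' -> bound_in x' r = false -> BVok xi r ->
  exists q, step r q /\ s = subst q x' xi.
Proof.
  intros HS Hr HB HOK. destruct r; simpl in HS; try (inversion HS; fail).
  - destruct (Nat.eqb_spec x x'); subst; [congruence|inversion HS].
  - inversion HS; subst; eexists; split; [apply st_andl|auto|apply st_andr|auto].
  - inversion HS; subst; eexists; split; [apply st_orl|auto|apply st_orr|auto].
  - inversion HS; subst; eexists; split; [apply st_dia|auto].
  - inversion HS; subst; eexists; split; [apply st_box|auto].
  - simpl in HB. apply orb_false_iff in HB as [H1 H2]. destruct (Nat.eqb_spec x x'); [subst; rewrite Nat.eqb_refl in H1; discriminate|].
    inversion HS; subst. exists (subst r x (FFix e x r)); split; [constructor|].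
    rewrite (subst_comm r x (FFix e x r) x' xi); auto. simpl. destruct (Nat.eqb_spec x x'); try congruence.
    apply HOK. simpl. rewrite Nat.eqb_refl; auto.
Qed.

Lemma im_xi x' xi b : ~ sub xi b -> bound_in x' b = false -> subst b x' xi = xi -> b = FVar x'.
Proof.
  intros HS HB E. destruct b; simpl in E; try (subst; exfalso; apply HS; constructor; fail).
  - destruct (Nat.eqb_spec x x'); subst; auto. exfalso; apply HS; constructor.
  - exfalso. pose proof (size_subst_ge b1 x' xi); pose proof (size_subst_ge b2 x' xi).
    assert (size (FAnd (subst b1 x' xi) (subst b2 x' xi)) = size xi) by (rewrite E; auto).
    destruct (free_in x' b1) eqn:F1; [pose proof (size_subst_free _ _ xi F1); simpl in H1; pose proof (size_pos b2); lia|].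
    destruct (free_in x' b2) eqn:F2; [pose proof (size_subst_free _ _ xi F2); simpl in H1; pose proof (size_pos b1); lia|].
    rewrite !subst_nf in E; auto. apply HS; rewrite <- E; constructor.
  - exfalso. pose proof (size_subst_ge b1 x' xi); pose proof (size_subst_ge b2 x' xi).
    assert (size (FOr (subst b1 x' xi) (subst b2 x' xi)) = size xi) by (rewrite E; auto).
    destruct (free_in x' b1) eqn:F1; [pose proof (size_subst_free _ _ xi F1); simpl in H1; pose proof (size_pos b2); lia|].
    destruct (free_in x' b2) eqn:F2; [pose proof (size_subst_free _ _ xi F2); simpl in H1; pose proof (size_pos b1); lia|].
    rewrite !subst_nf in E; auto. apply HS; rewrite <- E; constructor.
  - exfalso. assert (size (FDia (subst b x' xi)) = size xi) by (rewrite E; auto).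
    destruct (free_in x' b) eqn:F1; [pose proof (size_subst_free _ _ xi F1); pose proof (size_pos b); simpl in *; lia|].
    rewrite !subst_nf in E; auto. apply HS; rewrite <- E; constructor.
  - exfalso. assert (size (FBox (subst b x' xi)) = size xi) by (rewrite E; auto).
    destruct (free_in x' b) eqn:F1; [pose proof (size_subst_free _ _ xi F1); pose proof (size_pos b); simpl in *; lia|].
    rewrite !subst_nf in E; auto. apply HS; rewrite <- E; constructor.
  - exfalso. simpl in HB. apply orb_false_iff in HB as [H1 H2].
    destruct (Nat.eqb_spec x x'); [subst; rewrite Nat.eqb_refl in H1; discriminate|].
    assert (size (FFix e x (subst b x' xi)) = size xi) by (rewrite E; auto).
    destruct (free_in x' b) eqn:F1; [pose proof (size_subst_free _ _ xi F1); pose proof (size_pos b); simpl in *; lia|].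
    rewrite !subst_nf in E; auto. apply HS; rewrite <- E; constructor.
Qed.

Lemma not_sub_l xi a b : ~ sub xi (FAnd a b) -> ~ sub xi a /\ ~ sub xi b.
Proof. intro H; split; intro H'; apply H; [apply sub_andl|apply sub_andr]; auto. Qed.
Lemma not_sub_o xi a b : ~ sub xi (FOr a b) -> ~ sub xi a /\ ~ sub xi b.
Proof. intro H; split; intro H'; apply H; [apply sub_orl|apply sub_orr]; auto. Qed.
Lemma not_sub_d xi a : ~ sub xi (FDia a) -> ~ sub xi a.
Proof. intros H H'; apply H; constructor; auto. Qed.
Lemma not_sub_b xi a : ~ sub xi (FBox a) -> ~ sub xi a.
Proof. intros H H'; apply H; constructor; auto. Qed.
Lemma not_sub_f xi e z a : ~ sub xi (FFix e z a) -> ~ sub xi a.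
Proof. intros H H'; apply H; constructor; auto. Qed.

Lemma isvar_dec b x' : {b = FVar x'} + {b <> FVar x'}.
Proof. destruct b; try (right; discriminate). destruct (Nat.eq_dec x x'); [left; subst; auto|right; congruence]. Qed.

Lemma fix_bound_ne x' e z a : bound_in x' (FFix e z a) = false -> (z =? x') = false /\ bound_in x' a = false.
Proof. simpl; intro H; apply orb_false_iff in H as [H1 H2]; rewrite Nat.eqb_sym; auto. Qed.

Ltac bcase x' Hbn E :=
  match goal with
  | |- _ = FVar ?w => simpl in E; destruct (Nat.eqb_spec w x'); [subst; congruence|]; try discriminate; try congruence
  | _ => simpl in E; try discriminate; try congruence
  end.

Lemma im_inj x' xi : forall a b, ~ sub xi a -> ~ sub xi b -> bound_in x' a = false -> bound_in x' b = false ->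
  subst a x' xi = subst b x' xi -> a = b.
Proof.
  induction a as [| |p|p|v|a1 IH1 a2 IH2|a1 IH1 a2 IH2|a1 IH1|a1 IH1|ee z a1 IH1]; intros b Ha Hb HBa HBb E.
  all: destruct (isvar_dec b x') as [->|Hbn];
    [simpl in E; rewrite Nat.eqb_refl in E; apply (im_xi x' xi); auto|].
  5: { destruct (Nat.eq_dec v x') as [->|Hv].
       - exfalso; apply Hbn. apply (im_xi x' xi); auto. rewrite <- E; simpl; rewrite Nat.eqb_refl; auto.
       - simpl in E. destruct (Nat.eqb_spec v x'); [congruence|].
         destruct b as [| |q|q|w|b1 b2|b1 b2|b1|b1|ee2 w b1]; bcase x' Hbn E.
         all: try (apply fix_bound_ne in HBb as [H3 H4]; rewrite H3 in E; discriminate). }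
  9: { apply fix_bound_ne in HBa as [H1 H2]. simpl in E. rewrite H1 in E.
       destruct b as [| |q|q|w|b1 b2|b1 b2|b1|b1|ee2 w b1]; bcase x' Hbn E.
       apply fix_bound_ne in HBb as [H3 H4]. rewrite H3 in E.
       injection E; intros; subst. f_equal. apply IH1; eauto using not_sub_f. }
  all: destruct b as [| |q|q|w|b1 b2|b1 b2|b1|b1|ee2 w b1]; bcase x' Hbn E.
  all: try (apply fix_bound_ne in HBb as [H3 H4]; rewrite H3 in E; discriminate).
  all: simpl in HBa, HBb; repeat match goal with H : _ || _ = false |- _ => apply orb_false_iff in H as [? ?] end.
  - apply not_sub_l in Ha as [? ?]; apply not_sub_l in Hb as [? ?]. injection E; intros; f_equal; auto.
  - apply not_sub_o in Ha as [? ?]; apply not_sub_o in Hb as [? ?]. injection E; intros; f_equal; auto.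
  - apply not_sub_d in Ha; apply not_sub_d in Hb. injection E; intros; f_equal; auto.
  - apply not_sub_b in Ha; apply not_sub_b in Hb. injection E; intros; f_equal; auto.
Qed.

Lemma free_subst_in C y g v : free_in y C = true -> bound_in v C = false -> free_in v g = true ->
  free_in v (subst C y g) = true.
Proof.
  induction C; simpl; intros H1 H2 H3; try discriminate.
  - apply Nat.eqb_eq in H1; subst. rewrite Nat.eqb_refl; auto.
  - apply orb_false_iff in H2 as [? ?]. apply orb_true_iff in H1 as [H1|H1]; apply orb_true_iff; [left|right]; auto.
  - apply orb_false_iff in H2 as [? ?]. apply orb_true_iff in H1 as [H1|H1]; apply orb_true_iff; [left|right]; auto.
  - auto.
  - auto.
  - apply orb_false_iff in H2 as [H4 H5]. apply andb_true_iff in H1 as [H6 H7].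
    apply negb_true_iff in H6. rewrite Nat.eqb_sym, H6. simpl. rewrite H4, IHC; auto.
Qed.

Lemma free_occf_var v f : free_in v f = true -> occf (FVar v) f.
Proof.
  induction f; simpl; intro H; try discriminate.
  - apply Nat.eqb_eq in H; subst; apply occf_here.
  - apply orb_true_iff in H as [H|H]; [destruct (IHf1 H) as [n Hn]|destruct (IHf2 H) as [n Hn]]; exists (S n); [apply od_andl|apply od_andr]; auto.
  - apply orb_true_iff in H as [H|H]; [destruct (IHf1 H) as [n Hn]|destruct (IHf2 H) as [n Hn]]; exists (S n); [apply od_orl|apply od_orr]; auto.
  - destruct (IHf H) as [n Hn]; exists (S n); constructor; auto.
  - destruct (IHf H) as [n Hn]; exists (S n); constructor; auto.
  - apply andb_true_iff in H as [H1 H2]. destruct (IHf H2) as [n Hn]; exists (S n); constructor; auto.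
    simpl. apply negb_true_iff in H1. rewrite Nat.eqb_sym; auto.
Qed.

Lemma subst_ren C x x' g : free_in x' C = false -> bound_in x' C = false ->
  subst (subst C x (FVar x')) x' g = subst C x g.
Proof.
  induction C; simpl; intros H1 H2; auto.
  - destruct (Nat.eqb_spec x0 x); simpl. rewrite Nat.eqb_refl; auto. rewrite Nat.eqb_sym, H1; auto.
  - apply orb_false_iff in H1 as [? ?]; apply orb_false_iff in H2 as [? ?]. rewrite IHC1, IHC2; auto.
  - apply orb_false_iff in H1 as [? ?]; apply orb_false_iff in H2 as [? ?]. rewrite IHC1, IHC2; auto.
  - rewrite IHC; auto.
  - rewrite IHC; auto.
  - apply orb_false_iff in H2 as [H3 H4]. rewrite H3 in H1; simpl in H1.
    rewrite Nat.eqb_sym in H3.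
    destruct (Nat.eqb_spec x0 x); simpl; rewrite H3; f_equal; auto. apply subst_nf; auto.
Qed.

Lemma W_x'free_chi e x chi x' : World e x chi x' -> free_in x' chi = false.
Proof.
  intro W. pose proof (W_x'free _ _ _ _ W) as H. simpl in H. pose proof (W_neq _ _ _ _ W).
  destruct (Nat.eqb_spec x' x); try congruence. simpl in H; auto.
Qed.

Lemma CP_BVok e x chi x' r : World e x chi x' -> Clos (subst chi x (FVar x')) r -> BVok (FFix e x chi) r.
Proof. intros W H z Hz. eapply W_bv_notfree; eauto. eapply Clos_chip_bound; eauto. Qed.

Lemma im_chip e x chi x' : World e x chi x' ->
  subst (subst chi x (FVar x')) x' (FFix e x chi) = subst chi x (FFix e x chi).
Proof. intro W. apply subst_ren. apply (W_x'free_chi _ _ _ _ W). apply (W_x'bchi _ _ _ _ W). Qed.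

Lemma part1a e x chi x' r : World e x chi x' -> Clos (subst chi x (FVar x')) r ->
  Clos (FFix e x chi) (subst r x' (FFix e x chi)).
Proof.
  intros W H. pattern r; apply (steps_ind1 _ (subst chi x (FVar x'))); auto.
  - rewrite (im_chip _ _ _ _ W). apply steps_step. constructor.
  - intros b c Hb IH Hs. eapply steps_step_r; eauto. apply step_fwd; auto.
    eapply Clos_chip_x'bound; eauto. eapply CP_BVok; eauto.
Qed.

Lemma x'_in_chip e x chi x' : World e x chi x' -> Clos (subst chi x (FVar x')) (FVar x').
Proof.
  intro W. apply occf_reach. apply free_occf_var. apply free_subst_in.
  destruct W as [_ [H _]]; auto. apply (W_x'bchi _ _ _ _ W). simpl; apply Nat.eqb_refl.
Qed.

Lemma part1b e x chi x' a b : World e x chi x' -> Clos (subst chi x (FVar x')) a -> Clos (subst chi x (FVar x')) b ->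
  subst a x' (FFix e x chi) = subst b x' (FFix e x chi) -> a = b.
Proof.
  intros W Ha Hb E. apply (im_inj x' (FFix e x chi)); auto.
  eapply Good_chip; eauto. eapply Good_chip; eauto.
  eapply Clos_chip_x'bound; eauto. eapply Clos_chip_x'bound; eauto.
Qed.

Lemma step_pre_W e x chi x' r s : World e x chi x' -> Clos (subst chi x (FVar x')) r -> r <> FVar x' ->
  step (subst r x' (FFix e x chi)) s -> exists q, step r q /\ s = subst q x' (FFix e x chi).
Proof.
  intros W H Hr HS. apply step_pre; auto. eapply Clos_chip_x'bound; eauto. eapply CP_BVok; eauto.
Qed.

Lemma part1c e x chi x' r : World e x chi x' -> Clos (FFix e x chi) r ->
  exists phi, Clos (subst chi x (FVar x')) phi /\ subst phi x' (FFix e x chi) = r.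
Proof.
  intros W H. pattern r; apply (steps_ind1 _ (FFix e x chi)); auto.
  - exists (FVar x'). split. apply (x'_in_chip _ _ _ _ W). simpl; rewrite Nat.eqb_refl; auto.
  - intros b c Hb [phi [Hphi E]] Hs. subst b.
    destruct (isvar_dec phi x') as [->|Hn].
    + simpl in Hs. rewrite Nat.eqb_refl in Hs. inversion Hs; subst.
      exists (subst chi x (FVar x')). split. apply steps_refl. apply (im_chip _ _ _ _ W).
    + destruct (step_pre_W _ _ _ _ _ _ W Hphi Hn Hs) as [q [Hq ->]]. exists q; split; auto.
      eapply steps_step_r; eauto.
Qed.

Lemma part2 e x chi x' phi psi : World e x chi x' -> Clos (subst chi x (FVar x')) phi ->
  Clos (subst chi x (FVar x')) psi -> phi <> FVar x' ->
  (step phi psi <-> step (subst phi x' (FFix e x chi)) (subst psi x' (FFix e x chi))) /\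
  Ln phi = Ln (subst phi x' (FFix e x chi)).
Proof.
  intros W H1 H2 Hn. split; [split|].
  - intro Hs. apply step_fwd; auto. eapply Clos_chip_x'bound; eauto. eapply CP_BVok; eauto.
  - intro Hs. destruct (step_pre_W _ _ _ _ _ _ W H1 Hn Hs) as [q [Hq E]].
    assert (q = psi). { apply (part1b e x chi x' q psi W); [apply steps_step_r with phi; auto | auto | congruence]. } subst; auto.
  - destruct phi; simpl; auto.
    + destruct (Nat.eqb_spec x0 x'); subst; auto; congruence.
    + destruct (Nat.eqb x0 x'); auto.
Qed.

Lemma G1 x' xi phi : forall n psi, occd phi n psi -> bound_in x' psi = false -> BVok xi psi ->
  occf (subst phi x' xi) (subst psi x' xi).
Proof.
  induction 1; intros HB HOK; simpl in HB.
  - apply occf_here.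
  - apply orb_false_iff in HB as [? ?]. destruct IHoccd as [m Hm]; auto. intros z Hz; apply HOK; simpl; rewrite Hz; auto.
    exists (S m); simpl; apply od_andl; auto.
  - apply orb_false_iff in HB as [? ?]. destruct IHoccd as [m Hm]; auto. intros z Hz; apply HOK; simpl; rewrite Hz, orb_true_r; auto.
    exists (S m); simpl; apply od_andr; auto.
  - apply orb_false_iff in HB as [? ?]. destruct IHoccd as [m Hm]; auto. intros z Hz; apply HOK; simpl; rewrite Hz; auto.
    exists (S m); simpl; apply od_orl; auto.
  - apply orb_false_iff in HB as [? ?]. destruct IHoccd as [m Hm]; auto. intros z Hz; apply HOK; simpl; rewrite Hz, orb_true_r; auto.
    exists (S m); simpl; apply od_orr; auto.
  - destruct IHoccd as [m Hm]; auto. exists (S m); simpl; apply od_dia; auto.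
  - destruct IHoccd as [m Hm]; auto. exists (S m); simpl; apply od_box; auto.
  - apply orb_false_iff in HB as [H1 H2]. destruct IHoccd as [m Hm]; auto.
    intros z' Hz; apply HOK; simpl; rewrite Hz, orb_true_r; auto.
    exists (S m); simpl. rewrite Nat.eqb_sym, H1. apply od_fix; auto.
    destruct (free_in z (subst phi x' xi)) eqn:E; auto.
    destruct (free_subst _ _ _ _ E) as [[H3 H4]|H3]; [congruence|].
    rewrite (HOK z) in H3; auto. simpl; rewrite Nat.eqb_refl; auto.
Qed.

Lemma occd_atom s n a : occd s n a -> match a with FAnd _ _ | FOr _ _ | FDia _ | FBox _ | FFix _ _ _ => True | _ => s = a end.
Proof. destruct 1; auto. destruct s; auto. Qed.

Lemma G2 x' xi phi : ~ sub xi phi -> bound_in x' phi = false -> free_in x' phi = true ->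
  forall psi, ~ sub xi psi -> bound_in x' psi = false ->
  occf (subst phi x' xi) (subst psi x' xi) -> occf phi psi.
Proof.
  intros Gp Bp Fp psi. induction psi as [| |p|p|v|a IHa b IHb|a IHa b IHb|a IHa|a IHa|ee z a IHa]; intros Gs Bs [n H]; simpl in H.
  all: try (apply occd_atom in H; assert (phi = _) by (apply (im_inj x' xi); eauto); subst; apply occf_here; fail).
  - destruct (Nat.eqb_spec v x').
    + subst. assert (E : subst phi x' xi = xi).
      { apply occf_size_eq. exists n; auto. apply Nat.le_antisymm. apply (occf_size _ _ (ex_intro _ n H)).
        pose proof (size_subst_free _ _ xi Fp). pose proof (size_pos phi). lia. }
      rewrite (im_xi x' xi phi); auto. apply occf_here.
    + apply occd_atom in H. assert (phi = FVar v) by (apply (im_inj x' xi); simpl; auto; destruct (Nat.eqb_spec v x'); congruence).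
      subst; apply occf_here.
  - pose proof Bs as Bs'; pose proof Gs as Gs'. simpl in Bs'; apply orb_false_iff in Bs' as [? ?]. apply not_sub_l in Gs' as [? ?].
    inversion H; subst.
    + assert (phi = FAnd a b) by (apply (im_inj x' xi); auto). subst; apply occf_here.
    + destruct (IHa H2 H0 (ex_intro _ _ H6)) as [m Hm]; exists (S m); apply od_andl; auto.
    + destruct (IHb H3 H1 (ex_intro _ _ H6)) as [m Hm]; exists (S m); apply od_andr; auto.
  - pose proof Bs as Bs'; pose proof Gs as Gs'. simpl in Bs'; apply orb_false_iff in Bs' as [? ?]. apply not_sub_o in Gs' as [? ?].
    inversion H; subst.
    + assert (phi = FOr a b) by (apply (im_inj x' xi); auto). subst; apply occf_here.
    + destruct (IHa H2 H0 (ex_intro _ _ H6)) as [m Hm]; exists (S m); apply od_orl; auto.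
    + destruct (IHb H3 H1 (ex_intro _ _ H6)) as [m Hm]; exists (S m); apply od_orr; auto.
  - pose proof Gs as Gs'. apply not_sub_d in Gs'.
    inversion H; subst.
    + assert (phi = FDia a) by (apply (im_inj x' xi); auto). subst; apply occf_here.
    + destruct (IHa Gs' Bs (ex_intro _ _ H2)) as [m Hm]; exists (S m); apply od_dia; auto.
  - pose proof Gs as Gs'. apply not_sub_b in Gs'.
    inversion H; subst.
    + assert (phi = FBox a) by (apply (im_inj x' xi); auto). subst; apply occf_here.
    + destruct (IHa Gs' Bs (ex_intro _ _ H2)) as [m Hm]; exists (S m); apply od_box; auto.
  - pose proof Bs as Bs'. apply fix_bound_ne in Bs' as [H1 H2]. rewrite H1 in H. pose proof Gs as Gs'. apply not_sub_f in Gs'.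
    inversion H; subst.
    + assert (phi = FFix ee z a). { apply (im_inj x' xi); auto. simpl. rewrite H1. auto. } subst; apply occf_here.
    + destruct (IHa Gs' H2 (ex_intro _ _ H5)) as [m Hm]; exists (S m); apply od_fix; auto.
      destruct (free_in z phi) eqn:E; auto. exfalso.
      assert (free_in z (subst phi x' xi) = true) by (apply free_subst_keep; auto; apply Nat.eqb_neq; auto).
      congruence.
Qed.

Lemma part3 e x chi x' phi psi : World e x chi x' -> Clos (subst chi x (FVar x')) phi ->
  Clos (subst chi x (FVar x')) psi -> free_in x' phi = true ->
  (free_sub phi psi <-> free_sub (subst phi x' (FFix e x chi)) (subst psi x' (FFix e x chi))).
Proof.
  intros W H1 H2 F. rewrite !free_sub_iff. split.
  - intros [n H]. eapply G1; eauto. eapply Clos_chip_x'bound; eauto. eapply CP_BVok; eauto.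
  - apply G2; auto. eapply Good_chip; eauto. eapply Clos_chip_x'bound; eauto.
    eapply Good_chip; eauto. eapply Clos_chip_x'bound; eauto.
Qed.

Lemma steps_in_steps p a b : steps_in p a b -> steps a b.
Proof. induction 1. apply steps_refl. eapply steps_trans; [apply steps_step|]; eauto. Qed.

Lemma steps_in_first p a b : steps_in p a b -> free_sub p a.
Proof. destruct 1; auto. Qed.

Lemma sub_subst_free D y g : free_in y D = true -> sub g (subst D y g).
Proof.
  induction D; simpl; intro H; try discriminate.
  - apply Nat.eqb_eq in H; subst; rewrite Nat.eqb_refl; constructor.
  - apply orb_true_iff in H as [H|H]; [apply sub_andl|apply sub_andr]; auto.
  - apply orb_true_iff in H as [H|H]; [apply sub_orl|apply sub_orr]; auto.
  - constructor; auto.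
  - constructor; auto.
  - apply andb_true_iff in H as [H1 H2]. apply negb_true_iff in H1. rewrite Nat.eqb_sym, H1. constructor; auto.
Qed.

Lemma is_fix_size f : is_fix f -> 2 <= size f.
Proof. destruct f; simpl; try contradiction. pose proof (size_pos f); lia. Qed.

Lemma occf_var_inv v f : occf f (FVar v) -> f = FVar v.
Proof. intros [n H]. apply occd_atom in H; auto. Qed.

Lemma csub_fwd e x chi x' phi : World e x chi x' -> Clos (subst chi x (FVar x')) phi -> is_fix phi ->
  free_in x' phi = true -> forall r s, steps_in phi r s -> Clos (subst chi x (FVar x')) r ->
  steps_in (subst phi x' (FFix e x chi)) (subst r x' (FFix e x chi)) (subst s x' (FFix e x chi)).
Proof.
  intros W Hp Fix F r s H. induction H as [r Hr|r s t Hr Hs Hst IH]; intro Hc.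
  - constructor. apply (proj1 (part3 e x chi x' phi r W Hp Hc F)); auto.
  - apply si_step with (subst s x' (FFix e x chi)).
    + apply (proj1 (part3 e x chi x' phi r W Hp Hc F)); auto.
    + assert (Hn : r <> FVar x') by (intro; subst; apply free_sub_iff, occf_var_inv in Hr; subst; simpl in Fix; auto).
      assert (Hs' : Clos (subst chi x (FVar x')) s) by (apply steps_step_r with r; auto).
      apply (proj1 (proj1 (part2 e x chi x' r s W Hc Hs' Hn))); auto.
    + apply IH. apply steps_step_r with r; auto.
Qed.

Lemma csub_bwd e x chi x' phi : World e x chi x' -> Clos (subst chi x (FVar x')) phi -> is_fix phi ->
  free_in x' phi = true -> forall a b, steps_in (subst phi x' (FFix e x chi)) a b ->
  forall r, Clos (subst chi x (FVar x')) r -> a = subst r x' (FFix e x chi) ->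
  forall s, Clos (subst chi x (FVar x')) s -> b = subst s x' (FFix e x chi) -> steps_in phi r s.
Proof.
  intros W Hp Fix F a b H. induction H as [a Ha|a c t Ha Hs Hst IH]; intros r Hr Er s Hs' Es.
  - subst. assert (r = s) by (eapply part1b; eauto). subst. constructor.
    apply (proj2 (part3 e x chi x' phi s W Hp Hr F)); auto.
  - subst. assert (Hn : r <> FVar x').
    { intro; subst. simpl in Ha. rewrite Nat.eqb_refl in Ha. apply free_sub_iff, occf_size in Ha.
      pose proof (size_subst_free _ _ (FFix e x chi) F). pose proof (is_fix_size _ Fix). lia. }
    destruct (step_pre_W _ _ _ _ _ _ W Hr Hn Hs) as [q [Hq ->]].
    apply si_step with q; auto.
    + apply (proj2 (part3 e x chi x' phi r W Hp Hr F)); auto.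
    + apply IH; auto. apply steps_step_r with r; auto.
Qed.

Lemma part4 e x chi x' phi psi : World e x chi x' -> Clos (subst chi x (FVar x')) phi ->
  Clos (subst chi x (FVar x')) psi -> is_fix phi -> is_fix psi ->
  (csub psi phi <-> csub (subst psi x' (FFix e x chi)) (subst phi x' (FFix e x chi))).
Proof.
  intros W H1 H2 F1 F2. unfold csub. destruct (free_in x' phi) eqn:F.
  - split; intro H.
    + apply (csub_fwd e x chi x'); auto.
    + eapply (csub_bwd e x chi x'); eauto.
  - rewrite (subst_nf phi); auto. split; intro H.
    + assert (Hs : free_in x' psi = false).
      { destruct (free_in x' psi) eqn:E; auto. apply steps_in_steps in H. rewrite (steps_free _ _ _ H E) in F; auto. }
      rewrite subst_nf; auto.
    + assert (Hs : free_in x' psi = false).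
      { destruct (free_in x' psi) eqn:E; auto. exfalso.
        apply steps_in_steps in H. apply (Good_chip e x chi x' (subst psi x' (FFix e x chi)) W).
        apply steps_trans with phi; auto. apply sub_subst_free; auto. }
      rewrite subst_nf in H; auto.
Qed.

Lemma CP_tidy e x chi x' r : World e x chi x' -> Clos (subst chi x (FVar x')) r -> tidy r.
Proof. intros W H. eapply steps_tidy; eauto. apply (tidy_chip e); auto. Qed.

Lemma CX_tidy e x chi x' r : World e x chi x' -> Clos (FFix e x chi) r -> tidy r.
Proof. intros W H. eapply steps_tidy; eauto. destruct W; auto. Qed.

Lemma im_fix x' xi q : is_fix q -> is_fix (subst q x' xi) /\ fix_type (subst q x' xi) = fix_type q.
Proof. destruct q; simpl; try contradiction. destruct (Nat.eqb x x'); simpl; auto. Qed.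

Lemma im_fix_pre x' xi q : q <> FVar x' -> is_fix (subst q x' xi) -> is_fix q.
Proof. intros Hn Hf; destruct q; simpl in *; auto. destruct (Nat.eqb_spec x x'); subst; [congruence|simpl in Hf; contradiction]. Qed.

Lemma chain_map e x chi x' : World e x chi x' -> forall l,
  Forall (fun a => Clos (subst chi x (FVar x')) a /\ is_fix a) l ->
  (alt_chain l <-> alt_chain (map (fun a => subst a x' (FFix e x chi)) l)).
Proof.
  intros W l. induction l as [|a l IH]; intro HF; simpl; [tauto|].
  inversion HF as [|? ? [Ha Fa] HF']; subst.
  destruct (im_fix x' (FFix e x chi) a Fa) as [Fa' Ta'].
  assert (T1 : tidy a) by (eapply CP_tidy; eauto).
  assert (T2 : tidy (subst a x' (FFix e x chi))) by (eapply CX_tidy; eauto; apply part1a; auto).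
  destruct l as [|b l]; simpl; [tauto|].
  inversion HF' as [|? ? [Hb Fb] HF'']; subst.
  destruct (im_fix x' (FFix e x chi) b Fb) as [Fb' Tb'].
  specialize (IH HF'). simpl in IH. rewrite Ta', Tb' in *.
  unfold csub_strict in *. rewrite <- (part4 e x chi x' b a), <- (part4 e x chi x' a b); auto. tauto.
Qed.

Lemma alt_chain_tail a l : alt_chain (a :: l) -> alt_chain l.
Proof. simpl. destruct l; simpl; tauto. Qed.

Lemma alt_chain_elems l : alt_chain l -> Forall (fun a => tidy a /\ is_fix a) l.
Proof.
  induction l as [|a l IH]; intro H; constructor.
  - simpl in H; tauto.
  - apply IH. eapply alt_chain_tail; eauto.
Qed.

Lemma steps_in_last p a b : steps_in p a b -> free_sub p b.
Proof. induction 1; auto. Qed.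

Lemma chain_down l a : alt_chain (l ++ [a]) -> Forall (fun b => steps a b) (l ++ [a]).
Proof.
  induction l as [|c l IH]; intro H; simpl.
  - constructor; [apply steps_refl|constructor].
  - pose proof (alt_chain_tail _ _ H) as Ht. specialize (IH Ht).
    constructor; auto.
    destruct (l ++ [a]) as [|d l'] eqn:E; [destruct l; discriminate|].
    simpl in H; rewrite E in H; unfold csub_strict in H. destruct H as [_ [_ [[Hcs _] _]]]. apply steps_in_steps in Hcs.
    inversion IH; subst. eapply steps_trans; eauto.
Qed.

Lemma Forall_pre (P : form -> Prop) (f : form -> form) l :
  Forall (fun b => exists q, P q /\ f q = b) l -> exists lp, Forall P lp /\ map f lp = l.
Proof.
  induction l as [|b l IH]; intro H. exists []; split; auto.
  inversion H as [|? ? [q [Hq Eq]] H']; subst. destruct (IH H') as [lp [? ?]].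
  exists (q :: lp); split; [constructor|simpl; f_equal]; auto.
Qed.

Lemma chain_pre e x chi x' phi : World e x chi x' -> Clos (subst chi x (FVar x')) phi -> is_fix phi ->
  forall l, alt_chain (l ++ [subst phi x' (FFix e x chi)]) ->
  Forall (fun b => exists q, (Clos (subst chi x (FVar x')) q /\ is_fix q) /\ subst q x' (FFix e x chi) = b)
     (l ++ [subst phi x' (FFix e x chi)]).
Proof.
  intros W Hp Fp l. induction l as [|c l IH]; intro H.
  - constructor; [exists phi; auto|constructor].
  - pose proof (alt_chain_tail _ _ H) as Ht. specialize (IH Ht). simpl. constructor; auto.
    destruct (l ++ [subst phi x' (FFix e x chi)]) as [|d l'] eqn:E; [destruct l; discriminate|].
    simpl in H; rewrite E in H; unfold csub_strict in H. destruct H as [_ [Fc [[Hcs _] _]]].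
    inversion IH as [|? ? [qd [[Hqd Fqd] Ed]] _]; subst.
    assert (Hc : Clos (FFix e x chi) c).
    { eapply steps_trans; [apply part1a; eauto|]. apply steps_in_steps in Hcs; auto. }
    destruct (part1c e x chi x' c W Hc) as [qc [Hqc Ec]].
    exists qc. split; auto. split; auto.
    apply (im_fix_pre x' (FFix e x chi)); [|rewrite Ec; auto].
    intro; subst qc. simpl in Ec. rewrite Nat.eqb_refl in Ec. subst c.
    pose proof (steps_in_steps _ _ _ Hcs) as Hst.
    apply steps_in_last in Hcs. apply free_sub_iff in Hcs.
    destruct (free_in x' qd) eqn:Fx.
    + apply occf_size in Hcs. pose proof (size_subst_free _ _ (FFix e x chi) Fx). pose proof (is_fix_size _ Fqd). lia.
    + rewrite subst_nf in Hst; auto.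
      apply (Good_chip e x chi x' (FFix e x chi) W). apply steps_trans with qd; auto. constructor.
Qed.

Lemma part5 e x chi x' phi : World e x chi x' -> Clos (subst chi x (FVar x')) phi -> is_fix phi ->
  h_down phi = h_down (subst phi x' (FFix e x chi)).
Proof.
  intros W Hp Fp. unfold h_down. f_equal. apply functional_extensionality; intro n.
  apply propositional_extensionality. split.
  - intros [l [Hl Hn]]. exists (map (fun a => subst a x' (FFix e x chi)) l).
    assert (HF : Forall (fun a => Clos (subst chi x (FVar x')) a /\ is_fix a) (l ++ [phi])).
    { pose proof (chain_down _ _ Hl) as H1. pose proof (alt_chain_elems _ Hl) as H2.
      rewrite Forall_forall in *. intros b Hb. split. eapply steps_trans; eauto. apply H2; auto. }
    pose proof (proj1 (chain_map e x chi x' W _ HF) Hl) as H. rewrite map_app in H. simpl in H.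
    split; auto. rewrite length_app, length_map; rewrite length_app in Hn; auto.
  - intros [l [Hl Hn]].
    pose proof (chain_pre e x chi x' phi W Hp Fp l Hl) as H.
    apply Forall_app in H as [H _]. destruct (Forall_pre _ _ _ H) as [lp [HF Elp]].
    exists lp. subst l.
    assert (HF2 : Forall (fun a => Clos (subst chi x (FVar x')) a /\ is_fix a) (lp ++ [phi])).
    { apply Forall_app; split; auto. }
    split. apply (chain_map e x chi x' W _ HF2). rewrite map_app; auto.
    rewrite length_app, length_map in Hn. rewrite length_app; auto.
Qed.

Lemma steps_in_app p r s t : steps_in p r s -> steps_in p s t -> steps_in p r t.
Proof. induction 1; intro Hn; auto. eapply si_step; eauto. Qed.

Lemma steps_in_mono p q r s : steps_in p r s -> occf q p -> steps_in q r s.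
Proof.
  induction 1; intro Hq.
  - constructor. apply free_sub_iff. eapply occf_trans; eauto. apply free_sub_iff; auto.
  - eapply si_step; eauto. apply free_sub_iff. eapply occf_trans; eauto. apply free_sub_iff; auto.
Qed.

Lemma csub_trans a b c : csub a b -> csub b c -> csub a c.
Proof.
  unfold csub; intros H1 H2. eapply steps_in_app; eauto. eapply steps_in_mono; eauto.
  apply free_sub_iff. eapply steps_in_last; eauto.
Qed.

Lemma csub_antisym a b : csub a b -> csub b a -> a = b.
Proof.
  unfold csub; intros H1 H2. apply steps_in_last, free_sub_iff in H1. apply steps_in_last, free_sub_iff in H2.
  apply occf_antisym; auto.
Qed.

Lemma csub_occf a b : csub a b -> occf b a.
Proof. unfold csub; intro H. apply free_sub_iff. eapply steps_in_last; eauto. Qed.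

Lemma csub_refl_fs a : free_sub a a -> csub a a.
Proof. intro; constructor; auto. Qed.

Lemma chain_len a l : alt_chain (a :: l) -> length (a :: l) <= size a.
Proof.
  revert a. induction l as [|b l IH]; intros a H.
  - simpl. apply size_pos.
  - pose proof (alt_chain_tail _ _ H) as Ht. specialize (IH b Ht).
    simpl in H. destruct H as [_ [_ [[H1 H2] _]]].
    assert (a <> b) by (intro; subst; auto).
    pose proof (csub_occf _ _ H1). pose proof (occf_size _ _ H0).
    assert (size b <> size a) by (intro E; apply H; symmetry; apply occf_size_eq; auto).
    simpl in *. lia.
Qed.

Lemma max_exists_bounded (P : nat -> Prop) : forall B, (exists n, P n) -> (forall n, P n -> n <= B) -> exists m, is_max P m.
Proof.
  induction B; intros [n Hn] HB.
  - exists 0. assert (n = 0) by (specialize (HB n Hn); lia). subst. split; [auto|intros m Hm; specialize (HB m Hm); lia].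
  - destruct (classic (P (S B))) as [HP|HP].
    + exists (S B); split; auto.
    + apply IHB. exists n; auto. intros m Hm. specialize (HB m Hm). destruct (Nat.eq_dec m (S B)); subst; [contradiction|lia].
Qed.

Lemma max_of_spec (P : nat -> Prop) B : (exists n, P n) -> (forall n, P n -> n <= B) -> is_max P (max_of P).
Proof.
  intros H1 H2. unfold max_of. apply epsilon_spec. eapply max_exists_bounded; eauto.
Qed.

Definition Hup (t : form) := fun n => exists l, alt_chain (t :: l) /\ length (t :: l) = n.

Lemma h_up_spec t : tidy t -> is_fix t -> is_max (Hup t) (h_up t).
Proof.
  intros T F. apply (max_of_spec _ (size t)).
  - exists 1, []. simpl; auto.
  - intros n [l [Hl Hn]]. subst. apply chain_len; auto.
Qed.

Definition adj (e : fp) (d : Z) : Z := if Bool.eqb (Z.odd d) (fp_odd e) then d else (d + 1)%Z.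

Lemma Omega_adj e z a : Omega_g (FFix e z a) =
  adj e (Z.of_nat (cd_of (FFix e z a)) - Z.of_nat (h_up (FFix e z a)))%Z.
Proof. reflexivity. Qed.

Lemma adj_bounds e d : (d <= adj e d <= d + 1)%Z.
Proof. unfold adj. destruct (Bool.eqb _ _); lia. Qed.

Lemma adj_parity e d : Z.odd (adj e d) = fp_odd e.
Proof.
  unfold adj. destruct (Bool.eqb (Z.odd d) (fp_odd e)) eqn:E.
  - apply Bool.eqb_prop; auto.
  - rewrite Z.odd_add. simpl. destruct (Z.odd d), (fp_odd e); simpl in *; congruence.
Qed.

Lemma adj_mono e d1 d2 : (d1 <= d2)%Z -> (adj e d1 <= adj e d2)%Z.
Proof.
  intro H. destruct (Z.eq_dec d1 d2); [subst; lia|].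
  pose proof (adj_bounds e d1); pose proof (adj_bounds e d2); lia.
Qed.

Lemma cd_of_equiv a b : clos_equiv a b -> cd_of a = cd_of b.
Proof.
  intros [H1 H2]. unfold cd_of. f_equal. apply functional_extensionality; intro n.
  apply propositional_extensionality. split; intros [l [Hl [HF Hn]]]; exists l; split; auto; split; auto;
  rewrite Forall_forall in *; intros c Hc; destruct (HF c Hc); split; eapply steps_trans; eauto.
Qed.

Lemma fix_type_two a b : is_fix a -> is_fix b -> fix_type a <> fix_type b -> fix_type b = option_map fp_neg (fix_type a).
Proof.
  destruct a; try contradiction; destruct b; try contradiction; simpl. intros _ _ H.
  destruct e, e0; simpl; congruence.
Qed.

Lemma Omega_mono s t : tidy s -> tidy t -> is_fix s -> is_fix t -> csub s t -> clos_equiv s t ->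
  (Omega_g s <= Omega_g t)%Z.
Proof.
  intros Ts Tt Fs Ft Hst Heq.
  destruct (classic (s = t)) as [->|Hne]; [lia|].
  assert (Hns : ~ csub t s) by (intro H; apply Hne; apply csub_antisym; auto).
  destruct (h_up_spec t Tt Ft) as [[l [Hl Hlen]] _].
  destruct (h_up_spec s Ts Fs) as [_ Hmax].
  assert (Hcd : cd_of s = cd_of t) by (apply cd_of_equiv; auto).
  destruct s as [| | | | | | | | |es zs as_]; try contradiction.
  destruct t as [| | | | | | | | |et zt at_]; try contradiction.
  rewrite !Omega_adj. rewrite Hcd.
  destruct (classic (es = et)) as [<-|Hdiff].
  - assert (Hge : h_up (FFix es zt at_) <= h_up (FFix es zs as_)).
    { apply Hmax. destruct l as [|b l'].
      - exists []. simpl in *. split; auto.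
      - exists (b :: l'). split; [|simpl in *; lia].
        simpl in Hl. destruct Hl as [_ [_ [[H1 H2] [H3 H4]]]].
        simpl. split; auto. split; auto. split; [split|split; auto].
        + eapply csub_trans; eauto.
        + intro H. apply H2. eapply csub_trans; eauto. }
    apply adj_mono. lia.
  - assert (Hge : S (h_up (FFix et zt at_)) <= h_up (FFix es zs as_)).
    { apply Hmax. exists (FFix et zt at_ :: l). split; [|simpl in *; lia].
      simpl. split; auto. split; auto. split; [split; auto|split].
      + simpl. destruct es, et; simpl; congruence.
      + exact Hl. }
    pose proof (adj_bounds es (Z.of_nat (cd_of (FFix et zt at_)) - Z.of_nat (h_up (FFix es zs as_)))).
    pose proof (adj_bounds et (Z.of_nat (cd_of (FFix et zt at_)) - Z.of_nat (h_up (FFix et zt at_)))).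
    lia.
Qed.

Lemma Omega_even f : is_fix f -> (Z.even (Omega_g f) = true <-> fix_type f = Some Nu).
Proof.
  destruct f; try contradiction. intros _. rewrite Omega_adj. rewrite <- Z.negb_odd, adj_parity.
  destruct e; simpl; split; intro; congruence.
Qed.

Definition trace (u : nat -> form) := forall n, step (u n) (u (S n)).

Lemma trace_steps u : trace u -> forall i j, i <= j -> steps (u i) (u j).
Proof.
  intros Hu i j H. induction H. apply steps_refl. eapply steps_step_r; eauto.
Qed.

Lemma inf_equiv u a b : trace u -> inf_often u a -> inf_often u b -> clos_equiv a b.
Proof.
  intros Hu Ha Hb. destruct (Ha 0) as [i [_ Hi]]. destruct (Hb i) as [j [Hij Hj]]. destruct (Ha j) as [k [Hjk Hk]].
  split; [rewrite <- Hi, <- Hj|rewrite <- Hj, <- Hk]; apply trace_steps; auto.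
Qed.

Lemma W_lemma u tau : trace u -> (forall n, tidy (u n)) -> is_fix tau -> inf_often u tau ->
  (forall s, is_fix s -> inf_often u s -> csub s tau) ->
  (exists_wins u <-> fix_type tau = Some Nu).
Proof.
  intros Hu Ht Ftau Itau Hmax.
  assert (Tidy : forall f, inf_often u f -> tidy f) by (intros f Hf; destruct (Hf 0) as [n [_ <-]]; auto).
  split.
  - intros [f [Ff [If [Ef Mf]]]]. apply Omega_even; auto.
    assert (H1 := Mf tau Ftau Itau). assert (H2 : (Omega_g f <= Omega_g tau)%Z).
    { apply Omega_mono; auto. eapply inf_equiv; eauto. }
    assert (Omega_g f = Omega_g tau) by lia. rewrite <- H; auto.
  - intro H. exists tau. split; auto. split; auto. split. apply Omega_even; auto.
    intros g Fg Ig. apply Omega_mono; auto. eapply inf_equiv; eauto.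
Qed.

Fixpoint bnd (M : nat) (f : form) : bool :=
  match f with
  | FProp p | FNProp p => p <=? M
  | FVar v => v <=? M
  | FAnd a b | FOr a b => bnd M a && bnd M b
  | FDia a | FBox a => bnd M a
  | FFix _ z a => (z <=? M) && bnd M a
  | _ => true
  end.

Fixpoint maxall (f : form) : nat :=
  match f with
  | FProp p | FNProp p => p
  | FVar v => v
  | FAnd a b | FOr a b => max (maxall a) (maxall b)
  | FDia a | FBox a => maxall a
  | FFix _ z a => max z (maxall a)
  | _ => 0
  end.

Lemma bnd_mono M N f : M <= N -> bnd M f = true -> bnd N f = true.
Proof.
  intro H; induction f; simpl; intro H1; auto;
  repeat match goal with H : _ && _ = true |- _ => apply andb_true_iff in H as [? ?] end;
  repeat match goal with H : (_ <=? _) = true |- _ => apply Nat.leb_le in H end;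
  rewrite ?IHf1, ?IHf2, ?IHf; auto; rewrite ?andb_true_r; apply Nat.leb_le; lia.
Qed.

Lemma bnd_self f : bnd (maxall f) f = true.
Proof.
  induction f; simpl; auto; try (apply Nat.leb_le; lia).
  - rewrite (bnd_mono (maxall f1) _ f1), (bnd_mono (maxall f2) _ f2); auto; lia.
  - rewrite (bnd_mono (maxall f1) _ f1), (bnd_mono (maxall f2) _ f2); auto; lia.
  - rewrite (bnd_mono (maxall f) _ f); auto; try lia. rewrite andb_true_r. apply Nat.leb_le; lia.
Qed.

Lemma bnd_subst M B y g : bnd M B = true -> bnd M g = true -> bnd M (subst B y g) = true.
Proof.
  induction B; simpl; intros H1 H2; auto;
  repeat match goal with H : _ && _ = true |- _ => apply andb_true_iff in H as [? ?] end.
  - destruct (Nat.eqb x y); auto.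
  - rewrite IHB1, IHB2; auto.
  - rewrite IHB1, IHB2; auto.
  - destruct (Nat.eqb x y); simpl; rewrite ?H, ?H0, ?IHB; auto.
Qed.

Lemma bnd_step M a b : step a b -> bnd M a = true -> bnd M b = true.
Proof.
  destruct 1; simpl; intro H; repeat match goal with H : _ && _ = true |- _ => apply andb_true_iff in H as [? ?] end; auto.
  apply bnd_subst; simpl; auto. rewrite H, H0; auto.
Qed.

Lemma bnd_steps M a b : steps a b -> bnd M a = true -> bnd M b = true.
Proof. intros H Ha. pattern b; apply (steps_ind1 _ a); auto. intros c d _ Hc Hs. eapply bnd_step; eauto. Qed.

Fixpoint enum (k M : nat) : list form :=
  match k with
  | 0 => []
  | S k' => let L := enum k' M in
      [FTop; FBot] ++ map FProp (seq 0 (S M)) ++ map FNProp (seq 0 (S M)) ++ map FVar (seq 0 (S M)) ++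
      flat_map (fun a => map (FAnd a) L) L ++ flat_map (fun a => map (FOr a) L) L ++
      map FDia L ++ map FBox L ++
      flat_map (fun z => map (FFix Mu z) L ++ map (FFix Nu z) L) (seq 0 (S M))
  end.

Lemma in_seqM v M : v <= M -> In v (seq 0 (S M)).
Proof. intro; apply in_seq; lia. Qed.

Lemma enum_S k M : enum (S k) M =
      [FTop; FBot] ++ map FProp (seq 0 (S M)) ++ map FNProp (seq 0 (S M)) ++ map FVar (seq 0 (S M)) ++
      flat_map (fun a => map (FAnd a) (enum k M)) (enum k M) ++ flat_map (fun a => map (FOr a) (enum k M)) (enum k M) ++
      map FDia (enum k M) ++ map FBox (enum k M) ++
      flat_map (fun z => map (FFix Mu z) (enum k M) ++ map (FFix Nu z) (enum k M)) (seq 0 (S M)).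
Proof. reflexivity. Qed.

Lemma enum_complete M : forall f k, size f <= k -> bnd M f = true -> In f (enum k M).
Proof.
  induction f; intros k Hk Hb; destruct k as [|k]; try (pose proof (size_pos FTop); simpl in *; lia);
  simpl in Hb;
  repeat match goal with H : _ && _ = true |- _ => apply andb_true_iff in H as [? ?] end;
  repeat match goal with H : (_ <=? _) = true |- _ => apply Nat.leb_le in H end;
  rewrite enum_S; rewrite !in_app_iff.
  - simpl; auto.
  - simpl; auto.
  - right; left. apply in_map, in_seqM; auto.
  - right; right; left. apply in_map, in_seqM; auto.
  - right; right; right; left. apply in_map, in_seqM; auto.
  - do 4 right; left. apply in_flat_map. exists f1. simpl in Hk. split; [apply IHf1; auto; lia|].
    apply in_map, IHf2; auto; lia.
  - do 5 right; left. apply in_flat_map. exists f1. simpl in Hk. split; [apply IHf1; auto; lia|].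
    apply in_map, IHf2; auto; lia.
  - do 6 right; left. apply in_map, IHf; auto. simpl in Hk; lia.
  - do 7 right; left. apply in_map, IHf; auto. simpl in Hk; lia.
  - do 8 right. apply in_flat_map. exists x. split; [apply in_seqM; auto|].
    apply in_app_iff. simpl in Hk. destruct e; [left|right]; apply in_map, IHf; auto; lia.
Qed.

Lemma not_inf_often u f : ~ inf_often u f -> exists N, forall n, N <= n -> u n <> f.
Proof.
  intro H. apply not_all_ex_not in H as [N HN]. exists N. intros n Hn E. apply HN. exists n; auto.
Qed.

Lemma fin_avoid u (Q : form -> Prop) L : (forall f, In f L -> Q f -> ~ inf_often u f) ->
  exists N, forall n, N <= n -> forall f, In f L -> Q f -> u n <> f.
Proof.
  induction L as [|f L IH]; intro H.
  - exists 0; intros n _ f [].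
  - destruct IH as [N1 HN1]. intros g Hg; apply H; right; auto.
    destruct (classic (Q f)) as [Hq|Hq].
    + destruct (not_inf_often u f (H f (or_introl eq_refl) Hq)) as [N2 HN2].
      exists (max N1 N2). intros n Hn g [<-|Hg] Qg. apply HN2; lia. apply HN1; auto; lia.
    + exists N1. intros n Hn g [<-|Hg] Qg. contradiction. apply HN1; auto.
Qed.

Lemma free_for_of_bv g y C : (forall z, bound_in z C = true -> free_in z g = false) -> free_for g y C = true.
Proof.
  induction C; simpl; intro H; auto.
  - rewrite IHC1, IHC2; auto; intros z Hz; apply H; rewrite Hz; auto using orb_true_r.
  - rewrite IHC1, IHC2; auto; intros z Hz; apply H; rewrite Hz; auto using orb_true_r.
  - destruct (Nat.eqb x y); auto. rewrite IHC, H; simpl. rewrite orb_true_r; auto. rewrite Nat.eqb_refl; auto.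
    intros z Hz; apply H; rewrite Hz, orb_true_r; auto.
Qed.

Lemma OF C y r : free_in y C = true -> (forall z, bound_in z C = true -> free_in z r = false) -> occf r (subst C y r).
Proof. intros H1 H2. apply free_sub_occf. exists C, y. split; auto. split; auto. apply free_for_of_bv; auto. Qed.

Lemma HC t C y r : t = subst C y r -> (forall z, bound_in z C = true -> free_in z r = false) ->
  (occf t C /\ free_in y t = false) \/ occf r t.
Proof.
  intros -> H. destruct (free_in y C) eqn:E.
  - right; apply OF; auto.
  - left. rewrite subst_nf; auto. split; auto. apply occf_here.
Qed.

Lemma OS t y r : forall C, occf t (subst C y r) -> (forall z, bound_in z C = true -> free_in z r = false) ->
  occf t r \/ (occf t C /\ free_in y t = false) \/ occf r t.
Proof.
  induction C as [| |p|p|v|a IHa b IHb|a IHa b IHb|a IHa|a IHa|ee z a IHa]; intros [n H] HB; simpl in H.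
  all: try (apply occd_atom in H; right; left; subst; split; [apply occf_here|auto]; fail).
  - destruct (Nat.eqb_spec v y); [left; exists n; auto|].
    apply occd_atom in H. right; left; subst; split; [apply occf_here|simpl; apply Nat.eqb_neq; auto].
  - inversion H; subst.
    + destruct (HC _ (FAnd a b) y r eq_refl HB); tauto.
    + assert (HBa : forall z, bound_in z a = true -> free_in z r = false) by (intros z Hz; apply HB; simpl; rewrite Hz; auto).
      destruct (IHa ltac:(eexists; eassumption) HBa) as [?|[[[m Hm] ?]|?]]; auto. right; left; split; auto. exists (S m); apply od_andl; auto.
    + assert (HBb : forall z, bound_in z b = true -> free_in z r = false) by (intros z Hz; apply HB; simpl; rewrite Hz, orb_true_r; auto).
      destruct (IHb ltac:(eexists; eassumption) HBb) as [?|[[[m Hm] ?]|?]]; auto. right; left; split; auto. exists (S m); apply od_andr; auto.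
  - inversion H; subst.
    + destruct (HC _ (FOr a b) y r eq_refl HB); tauto.
    + assert (HBa : forall z, bound_in z a = true -> free_in z r = false) by (intros z Hz; apply HB; simpl; rewrite Hz; auto).
      destruct (IHa ltac:(eexists; eassumption) HBa) as [?|[[[m Hm] ?]|?]]; auto. right; left; split; auto. exists (S m); apply od_orl; auto.
    + assert (HBb : forall z, bound_in z b = true -> free_in z r = false) by (intros z Hz; apply HB; simpl; rewrite Hz, orb_true_r; auto).
      destruct (IHb ltac:(eexists; eassumption) HBb) as [?|[[[m Hm] ?]|?]]; auto. right; left; split; auto. exists (S m); apply od_orr; auto.
  - inversion H; subst.
    + destruct (HC _ (FDia a) y r eq_refl HB); tauto.
    + destruct (IHa ltac:(eexists; eassumption) HB) as [?|[[[m Hm] ?]|?]]; auto. right; left; split; auto. exists (S m); apply od_dia; auto.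
  - inversion H; subst.
    + destruct (HC _ (FBox a) y r eq_refl HB); tauto.
    + destruct (IHa ltac:(eexists; eassumption) HB) as [?|[[[m Hm] ?]|?]]; auto. right; left; split; auto. exists (S m); apply od_box; auto.
  - destruct (Nat.eqb_spec z y).
    + subst. right; left. split. exists n; auto.
      destruct (free_in y t) eqn:E; auto. pose proof (occd_fv _ _ _ y H E) as F; simpl in F; rewrite Nat.eqb_refl in F; discriminate.
    + inversion H; subst.
      * assert (E : FFix ee z (subst a y r) = subst (FFix ee z a) y r) by (simpl; destruct (Nat.eqb_spec z y); congruence).
        destruct (HC _ (FFix ee z a) y r E HB); tauto.
      * assert (HBa : forall z', bound_in z' a = true -> free_in z' r = false) by (intros z' Hz; apply HB; simpl; rewrite Hz, orb_true_r; auto).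
        destruct (IHa ltac:(eexists; eassumption) HBa) as [?|[[[m Hm] ?]|?]]; auto. right; left; split; auto. exists (S m); apply od_fix; auto.
Qed.

Lemma GAIN t r r2 : step r r2 -> tidy r -> ~ occf t r -> occf t r2 -> is_fix r /\ occf r t.
Proof.
  intros HS Ht Hn H2. destruct HS.
  - exfalso; apply Hn. destruct H2 as [m Hm]; exists (S m); apply od_andl; auto.
  - exfalso; apply Hn. destruct H2 as [m Hm]; exists (S m); apply od_andr; auto.
  - exfalso; apply Hn. destruct H2 as [m Hm]; exists (S m); apply od_orl; auto.
  - exfalso; apply Hn. destruct H2 as [m Hm]; exists (S m); apply od_orr; auto.
  - exfalso; apply Hn. destruct H2 as [m Hm]; exists (S m); apply od_dia; auto.
  - exfalso; apply Hn. destruct H2 as [m Hm]; exists (S m); apply od_box; auto.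
  - split; simpl; auto.
    assert (HB : forall z, bound_in z a = true -> free_in z (FFix e x a) = false).
    { intros z Hz. destruct (free_in z (FFix e x a)) eqn:E; auto. exfalso; apply (Ht z); split; auto.
      simpl; rewrite Hz, orb_true_r; auto. }
    destruct (OS _ _ _ _ H2 HB) as [?|[[[m Hm] ?]|?]]; auto; exfalso; apply Hn; auto.
    exists (S m); apply od_fix; auto.
Qed.

Lemma find_switch (Q : nat -> Prop) k : forall j, k < j -> ~ Q k -> Q j -> exists i, k <= i < j /\ ~ Q i /\ Q (S i).
Proof.
  induction j; intros H1 H2 H3; [lia|].
  destruct (classic (Q j)) as [Hj|Hj].
  - destruct (Nat.eq_dec k j) as [->|Hne]; [contradiction|].
    destruct (IHj ltac:(lia) H2 Hj) as [i [? [? ?]]]. exists i; split; auto; lia.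
  - exists j; split; auto; lia.
Qed.

Lemma SI u t m : trace u -> (forall k, m <= k -> occf t (u k)) ->
  forall d i, m <= i -> steps_in t (u i) (u (i + d)).
Proof.
  intros Hu H. induction d; intros i Hi.
  - rewrite Nat.add_0_r. constructor. apply free_sub_iff; auto.
  - apply si_step with (u (S i)). apply free_sub_iff; auto. apply Hu.
    replace (i + S d) with (S i + d) by lia. apply IHd; lia.
Qed.

Lemma TM u M t : trace u -> (forall n, tidy (u n)) -> (forall n, bnd M (u n) = true) ->
  is_fix t -> inf_often u t -> (forall g, is_fix g -> inf_often u g -> size t <= size g) ->
  forall s, is_fix s -> inf_often u s -> csub s t.
Proof.
  intros Hu Ht Hb Ft It Hmin s Fs Is.
  destruct (fin_avoid u (fun f => is_fix f /\ size f < size t) (enum (size t) M)) as [N HN].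
  { intros f _ [Ff Sf] If. specialize (Hmin f Ff If). lia. }
  assert (C1 : forall n, N <= n -> ~ (is_fix (u n) /\ size (u n) < size t)).
  { intros n Hn [F1 S1]. apply (HN n Hn (u n)); auto. apply enum_complete; auto. lia. }
  destruct (It N) as [m [Hm Em]].
  assert (C2 : forall k, m <= k -> occf t (u k)).
  { intros k Hk. apply NNPP; intro Hn.
    destruct (It (S k)) as [j [Hj Ej]].
    destruct (find_switch (fun i => occf t (u i)) k j ltac:(lia) Hn) as [i [Hi [Hni Hsi]]].
    { rewrite Ej. apply occf_here. }
    destruct (GAIN _ _ _ (Hu i) (Ht i) Hni Hsi) as [Fi Oi].
    apply (C1 i); [lia|]. split; auto.
    pose proof (occf_size _ _ Oi).
    assert (u i <> t) by (intro E; apply Hni; rewrite E; apply occf_here).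
    assert (size (u i) <> size t) by (intro E; apply H0; apply occf_size_eq; auto).
    lia. }
  destruct (Is m) as [j [Hj Ej]].
  unfold csub. rewrite <- Em, <- Ej. replace j with (m + (j - m)) by lia. apply SI with m; auto.
intros k Hk; rewrite Em; auto.
Qed.

Lemma min_exists (P : form -> Prop) : (exists f, P f) -> exists f, P f /\ forall g, P g -> size f <= size g.
Proof.
  intros [f Hf].
  assert (H : forall n f, size f <= n -> P f -> exists m, P m /\ forall g, P g -> size m <= size g).
  { induction n; intros f0 Hs Hp.
    - pose proof (size_pos f0); lia.
    - destruct (classic (exists g, P g /\ size g < size f0)) as [[g [Hg Hlt]]|Hno].
      + apply IHn with g; auto; lia.
      + exists f0; split; auto. intros g Hg. destruct (Nat.le_gt_cases (size f0) (size g)); auto.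
        exfalso; apply Hno; eauto. }
  eapply H; eauto.
Qed.

Lemma part6 e x chi x' t : World e x chi x' ->
  (forall n, Clos (subst chi x (FVar x')) (t n)) -> (forall n, step (t n) (t (S n))) ->
  winner t = winner (fun n => subst (t n) x' (FFix e x chi)).
Proof.
  intros W Hc Hs.
  set (xi := FFix e x chi). set (chi' := subst chi x (FVar x')).
  set (t' := fun n => subst (t n) x' xi).
  assert (Tr : trace t) by exact Hs.
  assert (Tr' : trace t').
  { intro n. unfold t'. apply step_fwd; auto. eapply Clos_chip_x'bound; eauto. eapply CP_BVok; eauto. }
  assert (Ti : forall n, tidy (t n)) by (intro n; eapply CP_tidy; eauto).
  assert (Ti' : forall n, tidy (t' n)) by (intro n; eapply CX_tidy; eauto; apply part1a; auto).
  assert (Bn : forall n, bnd (maxall chi') (t n) = true) by (intro n; apply bnd_steps with chi'; [apply Hc|apply bnd_self]).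
  assert (Pre : forall g, is_fix g -> inf_often t' g -> exists s, is_fix s /\ inf_often t s /\ subst s x' xi = g).
  { intros g Fg Ig. destruct (Ig 0) as [n0 [_ E0]]. exists (t n0).
    assert (Hn : t n0 <> FVar x') by (intro E; pose proof (Hs n0) as S0; rewrite E in S0; inversion S0).
    split; [apply (im_fix_pre x' xi); auto; unfold t' in E0; rewrite E0; auto|split; auto].
    intros N. destruct (Ig N) as [n [Hn' En]]. exists n; split; auto.
    apply (part1b e x chi x'); auto. unfold t' in *. fold xi. congruence. }
  assert (Img : forall s, inf_often t s -> inf_often t' (subst s x' xi)).
  { intros s Is N. destruct (Is N) as [n [? ?]]. exists n; split; auto. unfold t'; congruence. }
  assert (Equiv : exists_wins t <-> exists_wins t').
  { destruct (classic (exists f, is_fix f /\ inf_often t f)) as [Hex|Hno].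
    - destruct (min_exists _ Hex) as [tau [[Ftau Itau] Hmin]].
      assert (Hmax := TM t (maxall chi') tau Tr Ti Bn Ftau Itau (fun g Fg Ig => Hmin g (conj Fg Ig))).
      assert (Ctau : Clos chi' tau) by (destruct (Itau 0) as [n [_ <-]]; auto).
      destruct (im_fix x' xi tau Ftau) as [Ftau' Ttau'].
      rewrite (W_lemma t tau Tr Ti Ftau Itau Hmax).
      rewrite (W_lemma t' (subst tau x' xi) Tr' Ti' Ftau' (Img _ Itau)).
      + rewrite Ttau'. tauto.
      + intros g Fg Ig. destruct (Pre g Fg Ig) as [s [Fs [Is <-]]].
        assert (Cs : Clos chi' s) by (destruct (Is 0) as [n [_ <-]]; auto).
        apply (proj1 (part4 e x chi x' tau s W Ctau Cs Ftau Fs)); auto.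
    - split.
      + intros [f [Ff [If _]]]. exfalso; apply Hno; eauto.
      + intros [g [Fg [Ig _]]]. exfalso. destruct (Pre g Fg Ig) as [s [Fs [Is _]]]. apply Hno; eauto. }
  unfold winner. fold t'.
  destruct (excluded_middle_informative (exists_wins t)); destruct (excluded_middle_informative (exists_wins t')); tauto.
Qed.

Theorem mainTheorem8 (e : fp) (x : nat) (chi : form) (x' : nat) :
  let xi := FFix e x chi in
  let chi' := subst chi x (FVar x') in
  tidy xi -> free_in x chi = true -> ~ Clos chi xi ->
  occurs x' xi = false ->
  tidy chi' /\
  (* (1) bijection Clos chi' -> Clos xi *)
  ((forall phi, Clos chi' phi -> Clos xi (subst phi x' xi)) /\
   (forall phi psi, Clos chi' phi -> Clos chi' psi ->
      subst phi x' xi = subst psi x' xi -> phi = psi) /\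
   (forall rho, Clos xi rho -> exists phi, Clos chi' phi /\ subst phi x' xi = rho)) /\
  (forall phi psi, Clos chi' phi -> Clos chi' psi ->
    (* (2) *)
    (phi <> FVar x' ->
       (step phi psi <-> step (subst phi x' xi) (subst psi x' xi)) /\
       Ln phi = Ln (subst phi x' xi)) /\
    (* (3) *)
    (free_in x' phi = true ->
       (free_sub phi psi <-> free_sub (subst phi x' xi) (subst psi x' xi))) /\
    (* (4) *)
    (is_fix phi -> is_fix psi ->
       (csub psi phi <-> csub (subst psi x' xi) (subst phi x' xi)))) /\
  (* (5) *)
  (forall phi, Clos chi' phi -> is_fix phi -> h_down phi = h_down (subst phi x' xi)) /\
  (* (6) *)
  (forall t : nat -> form, (forall n, Clos chi' (t n)) -> (forall n, step (t n) (t (S n))) ->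
     winner t = winner (fun n => subst (t n) x' xi)).
Proof.
  intros xi chi' H1 H2 H3 H4.
  assert (W : World e x chi x') by (repeat split; auto).
  unfold xi, chi' in *.
  split; [apply (tidy_chip e); auto|].
  split; [split; [|split]|].
  - intros; apply part1a; auto.
  - intros; eapply part1b; eauto.
  - intros; apply part1c; auto.
  - split; [|split].
    + intros phi psi Hp Hq. split; [|split].
      * intros; apply part2; auto.
      * intros; apply part3; auto.
      * intros; apply part4; auto.
    + intros; apply part5; auto.
    + intros; apply part6; auto.
Qed.
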